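(* Let $f:S^1\to S^1$ be a Morse-Smale diffeomorphism. Then: (i) $2^{f}$ has uncountably many periodic points of each period $k\geq 1$; (ii) $R(2^{f}) \neq \Omega(2^{f}) = \overline{Per(2^{f})}= CR(2^{f})$; (iii) $2^f$ is not transitive.
   Context: A $C^r$ diffeomorphism ($r\ge1$) of a compact connected manifold without boundary is Morse-Smale if its nonwandering set consists of finitely many periodic points, all hyperbolic, with mutually transversal stable and unstable manifolds. For a compact metric space $X$, $2^X$ is the hyperspace of nonempty closed subsets of $X$ with the Hausdorff metric, and $2^f(A)=f(A)$. For a map $g$, $R(g)$, $\Omega(g)$, $Per(g)$ and $CR(g)$ denote respectively the sets of recurrent, nonwandering, periodic and chain recurrent points of $g$. *)

(* Defs.v *)
From Stdlib Require Import Reals List.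
From Coquelicot Require Import Coquelicot.
Open Scope R_scope.

Definition periodic_pt {X : Type} (Sp : X -> Prop) (g : X -> X) (x : X) : Prop :=
  Sp x /\ exists n : nat, (0 < n)%nat /\ Nat.iter n g x = x.

Definition has_period {X : Type} (Sp : X -> Prop) (g : X -> X) (k : nat) (x : X) : Prop :=
  Sp x /\ (0 < k)%nat /\ Nat.iter k g x = x /\
  forall j : nat, (0 < j)%nat -> (j < k)%nat -> Nat.iter j g x <> x.

Definition recurrent {X : Type} (Sp : X -> Prop) (d : X -> X -> R) (g : X -> X) (x : X) : Prop :=
  Sp x /\ forall e, 0 < e -> exists n : nat, (0 < n)%nat /\ d (Nat.iter n g x) x < e.

Definition nonwandering {X : Type} (Sp : X -> Prop) (d : X -> X -> R) (g : X -> X) (x : X) : Prop :=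
  Sp x /\ forall e, 0 < e -> exists (n : nat) (y : X),
    (0 < n)%nat /\ Sp y /\ d y x < e /\ d (Nat.iter n g y) x < e.

Definition in_closure_per {X : Type} (Sp : X -> Prop) (d : X -> X -> R) (g : X -> X) (x : X) : Prop :=
  Sp x /\ forall e, 0 < e -> exists y, periodic_pt Sp g y /\ d x y < e.

Definition chain_recurrent {X : Type} (Sp : X -> Prop) (d : X -> X -> R) (g : X -> X) (x : X) : Prop :=
  Sp x /\ forall e, 0 < e -> exists (n : nat) (c : nat -> X),
    (0 < n)%nat /\ c O = x /\ c n = x /\
    forall i : nat, (i < n)%nat -> Sp (c i) /\ d (g (c i)) (c (S i)) < e.

(* topological transitivity: for all nonempty open U, V, g^n(U) meets V for some n >= 1
   (stated with balls, which form a base of the topology) *)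
Definition transitive {X : Type} (Sp : X -> Prop) (d : X -> X -> R) (g : X -> X) : Prop :=
  forall x y e, Sp x -> Sp y -> 0 < e -> exists (n : nat) (z : X),
    (0 < n)%nat /\ Sp z /\ d z x < e /\ d (Nat.iter n g z) y < e.

Definition countable {X : Type} (P : X -> Prop) : Prop :=
  exists h : X -> nat, forall x y, P x -> P y -> h x = h y -> x = y.

Definition S1 : Type := {x : R | x >= 0 /\ x < 1}.

Definition proj (x : R) : S1 := exist _ (frac_part x) (base_fp x).

Definition dS (a b : S1) : R :=
  let t := Rabs (proj1_sig a - proj1_sig b) in Rmin t (1 - t).

Definition whole_circle (x : S1) : Prop := True.

Definition closedS (A : S1 -> Prop) : Prop :=
  forall x, (forall e, 0 < e -> exists y, A y /\ dS x y < e) -> A x.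

Definition hyper (A : S1 -> Prop) : Prop := closedS A /\ exists x, A x.

Definition dist_to (x : S1) (B : S1 -> Prop) : R :=
  real (Glb_Rbar (fun r => exists b, B b /\ r = dS x b)).

Definition hausdorff (A B : S1 -> Prop) : R :=
  Rmax (real (Lub_Rbar (fun r => exists a, A a /\ r = dist_to a B)))
       (real (Lub_Rbar (fun r => exists b, B b /\ r = dist_to b A))).

Definition hyper_map (f : S1 -> S1) (A : S1 -> Prop) : S1 -> Prop :=
  fun y => exists x, A x /\ f x = y.

Definition C1_diffeo_lift (F : R -> R) (f : S1 -> S1) : Prop :=
  (forall x, ex_derive F x) /\
  (forall x, continuous (Derive F) x) /\
  (forall x, Derive F x <> 0) /\
  ((forall x, F (x + 1) = F x + 1) \/ (forall x, F (x + 1) = F x - 1)) /\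
  (forall x, f (proj x) = proj (F x)).

Definition hyperbolic_pt (F : R -> R) (f : S1 -> S1) (p : S1) : Prop :=
  forall (n : nat) (x : R), (0 < n)%nat -> Nat.iter n f p = p -> proj x = p ->
    Rabs (Derive (Nat.iter n F) x) <> 1.

Definition Ws (f : S1 -> S1) (p x : S1) : Prop :=
  is_lim_seq (fun n => dS (Nat.iter n f x) (Nat.iter n f p)) (Finite 0).

Definition Wu (f : S1 -> S1) (p x : S1) : Prop :=
  exists xs ps : nat -> S1, xs O = x /\ ps O = p /\
    (forall n, f (xs (S n)) = xs n) /\ (forall n, f (ps (S n)) = ps n) /\
    is_lim_seq (fun n => dS (xs n) (ps n)) (Finite 0).

Definition interiorS (W : S1 -> Prop) (x : S1) : Prop :=
  exists e, 0 < e /\ forall y, dS x y < e -> W y.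

(* transversality in dimension 1: at an intersection point, the tangent spaces
   span T_x S^1, i.e. one of the two manifolds is 1-dimensional (open) near x *)
Definition transversal (f : S1 -> S1) : Prop :=
  forall p q x, periodic_pt whole_circle f p -> periodic_pt whole_circle f q ->
    Wu f p x -> Ws f q x -> interiorS (Wu f p) x \/ interiorS (Ws f q) x.

Definition MorseSmale (f : S1 -> S1) : Prop :=
  exists F : R -> R, C1_diffeo_lift F f /\
    (exists l : list S1, forall x, nonwandering whole_circle dS f x -> In x l) /\
    (forall x, nonwandering whole_circle dS f x -> periodic_pt whole_circle f x) /\
    (forall p, periodic_pt whole_circle f p -> hyperbolic_pt F f p) /\
    transversal f.

(* Main.v *)
Require Import Defs.
From Stdlib Require Import Reals Lra Lia ZArith List Classical ClassicalEpsilon FunctionalExtensionality PropExtensionality ProofIrrelevance Rtopology.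
From Coquelicot Require Import Coquelicot.
Open Scope R_scope.


Lemma S1_eq (a b : S1) : proj1_sig a = proj1_sig b -> a = b.
Proof. destruct a as [a Ha], b as [b Hb]; simpl; intros ->; f_equal; apply proof_irrelevance. Qed.

Lemma S1_bounds (a : S1) : 0 <= proj1_sig a < 1.
Proof. destruct a as [a [H1 H2]]; simpl; lra. Qed.

Lemma frac_shift (x : R) (k : Z) : frac_part (x + IZR k) = frac_part x.
Proof.
  unfold frac_part.
  assert (H: Int_part (x + IZR k) = (Int_part x + k)%Z).
  { symmetry; apply Int_part_spec. rewrite plus_IZR.
    pose proof (base_Int_part x) as [H1 H2]. lra. }
  rewrite H, plus_IZR; ring.
Qed.

Lemma proj_shift (x : R) (k : Z) : proj (x + IZR k) = proj x.
Proof. apply S1_eq; simpl; apply frac_shift. Qed.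

Lemma frac_small (x : R) : 0 <= x < 1 -> frac_part x = x.
Proof.
  intros H. unfold frac_part.
  assert (Int_part x = 0%Z) as ->. { symmetry; apply Int_part_spec; simpl; lra. }
  simpl; ring.
Qed.

Lemma proj_val (a : S1) : proj (proj1_sig a) = a.
Proof. apply S1_eq; simpl; apply frac_small, S1_bounds. Qed.

Lemma proj_decomp (x : R) : exists k : Z, x = proj1_sig (proj x) + IZR k.
Proof. exists (Int_part x). simpl. unfold frac_part. ring. Qed.

Lemma proj_eq_iff (p q : R) : proj p = proj q <-> exists k : Z, p = q + IZR k.
Proof.
  split.
  - intros H. destruct (proj_decomp p) as [k1 H1], (proj_decomp q) as [k2 H2].
    rewrite H in H1. exists (k1 - k2)%Z. rewrite minus_IZR. lra.
  - intros [k ->]. apply proj_shift.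
Qed.

Lemma dS_proj_exact (p q : R) : exists k : Z, Rabs (p - q - IZR k) = dS (proj p) (proj q).
Proof.
  unfold dS. simpl.
  pose proof (base_fp p) as Hp. pose proof (base_fp q) as Hq.
  assert (Ep : p = IZR (Int_part p) + frac_part p) by (unfold frac_part; ring).
  assert (Eq : q = IZR (Int_part q) + frac_part q) by (unfold frac_part; ring).
  set (a := frac_part p) in *. set (b := frac_part q) in *.
  set (k0 := (Int_part p - Int_part q)%Z).
  assert (D : p - q - IZR k0 = a - b) by (unfold k0; rewrite minus_IZR; lra).
  unfold Rmin. destruct (Rle_dec (Rabs (a - b)) (1 - Rabs (a - b))).
  - exists k0. rewrite D. reflexivity.
  - destruct (Rle_dec 0 (a - b)).
    + exists (k0 + 1)%Z. rewrite plus_IZR. rewrite (Rabs_pos_eq (a - b)) by lra.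
      replace (p - q - (IZR k0 + IZR 1)) with (a - b - 1) by lra.
      rewrite Rabs_left by lra. simpl; lra.
    + exists (k0 - 1)%Z. rewrite minus_IZR. rewrite (Rabs_left (a - b)) by lra.
      replace (p - q - (IZR k0 - IZR 1)) with (a - b + 1) by lra.
      rewrite Rabs_pos_eq by lra. simpl; lra.
Qed.

Lemma dS_proj_le (p q : R) : dS (proj p) (proj q) <= Rabs (p - q).
Proof.
  unfold dS; simpl.
  pose proof (base_fp p) as Hp. pose proof (base_fp q) as Hq.
  set (a := frac_part p) in *. set (b := frac_part q) in *.
  assert (D : p - q = a - b + IZR (Int_part p - Int_part q)).
  { unfold a, b, frac_part. rewrite minus_IZR. ring. }
  rewrite D. set (m := (Int_part p - Int_part q)%Z).
  destruct (Z.lt_trichotomy m 0) as [Hm|[Hm|Hm]].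
  - assert (IZR m <= -1) by (apply IZR_le; lia).
    eapply Rle_trans; [apply Rmin_r|]. unfold Rabs at 2; destruct (Rcase_abs (a - b + IZR m)); 
    unfold Rabs; destruct (Rcase_abs (a - b)); lra.
  - rewrite Hm. simpl. rewrite Rplus_0_r. apply Rmin_l.
  - assert (IZR m >= 1) by (apply Rle_ge, IZR_le; lia).
    eapply Rle_trans; [apply Rmin_r|]. unfold Rabs at 2; destruct (Rcase_abs (a - b + IZR m)); 
    unfold Rabs; destruct (Rcase_abs (a - b)); lra.
Qed.

Lemma proj_sub (x : R) (k : Z) : proj (x - IZR k) = proj x.
Proof. replace (x - IZR k) with (x + IZR (- k)) by (rewrite opp_IZR; ring). apply proj_shift. Qed.

Lemma dS_lift (x y : S1) (p : R) : proj p = x -> exists q, proj q = y /\ Rabs (q - p) = dS y x.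
Proof.
  intros Hp. destruct (dS_proj_exact (proj1_sig y) p) as [k Hk].
  exists (proj1_sig y - IZR k). split.
  - rewrite proj_sub. apply proj_val.
  - rewrite proj_val, Hp in Hk. rewrite <- Hk. f_equal. ring.
Qed.

Lemma dS_sym (x y : S1) : dS x y = dS y x.
Proof. unfold dS. rewrite Rabs_minus_sym. reflexivity. Qed.

Lemma dS_nonneg (x y : S1) : 0 <= dS x y.
Proof.
  unfold dS. pose proof (S1_bounds x); pose proof (S1_bounds y).
  apply Rmin_glb; [apply Rabs_pos|]. unfold Rabs; destruct Rcase_abs; lra.
Qed.

Lemma dS_refl (x : S1) : dS x x = 0.
Proof. unfold dS. rewrite Rminus_diag, Rabs_R0. apply Rle_antisym; [apply Rmin_l|]. apply Rmin_glb; lra. Qed.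

Lemma dS_le_abs (x y : S1) : dS x y <= Rabs (proj1_sig x - proj1_sig y).
Proof. unfold dS. apply Rmin_l. Qed.

Lemma dS_eq0 (x y : S1) : dS x y = 0 -> x = y.
Proof.
  intros H. unfold dS in H. pose proof (S1_bounds x); pose proof (S1_bounds y).
  apply S1_eq. unfold Rmin in H. destruct Rle_dec.
  - apply Rabs_eq_0 in H. lra.
  - unfold Rabs in *; destruct Rcase_abs; lra.
Qed.

Lemma dS_triangle (x y z : S1) : dS x z <= dS x y + dS y z.
Proof.
  destruct (dS_lift y x (proj1_sig y) (proj_val y)) as [x' [Hx Ex]].
  destruct (dS_lift y z (proj1_sig y) (proj_val y)) as [z' [Hz Ez]].
  replace (dS x z) with (dS (proj x') (proj z')) by (rewrite Hx, Hz; reflexivity).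
  eapply Rle_trans; [apply dS_proj_le|].
  rewrite (dS_sym y z), <- Ex, <- Ez.
  replace (x' - z') with ((x' - proj1_sig y) + - (z' - proj1_sig y)) by ring.
  eapply Rle_trans; [apply Rabs_triang|]. rewrite Rabs_Ropp. lra.
Qed.

Lemma dS_le_half (x y : S1) : dS x y <= 1/2.
Proof. unfold dS, Rmin. destruct Rle_dec; lra. Qed.


Lemma glb_spec (E : R -> Prop) (lo : R) (x0 : R) :
  E x0 -> (forall x, E x -> lo <= x) ->
  (forall x, E x -> real (Glb_Rbar E) <= x) /\
  (forall r, (forall x, E x -> r <= x) -> r <= real (Glb_Rbar E)).
Proof.
  intros H0 Hlo. destruct (Glb_Rbar_correct E) as [Hlb Hg].
  assert (Hlo' : Rbar_le lo (Glb_Rbar E)) by (apply Hg; intros x Hx; apply Hlo, Hx).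
  assert (Hup : Rbar_le (Glb_Rbar E) x0) by (apply Hlb, H0).
  destruct (Glb_Rbar E) as [g| |] eqn:Eg; simpl in *; try contradiction.
  split.
  - intros x Hx. specialize (Hlb x Hx). simpl in Hlb. exact Hlb.
  - intros r Hr. assert (Rbar_le r g). { apply (Hg (Finite r)). intros x Hx; simpl; apply Hr, Hx. }
    exact H.
Qed.

Lemma lub_spec (E : R -> Prop) (hi : R) (x0 : R) :
  E x0 -> (forall x, E x -> x <= hi) ->
  (forall x, E x -> x <= real (Lub_Rbar E)) /\
  (forall r, (forall x, E x -> x <= r) -> real (Lub_Rbar E) <= r).
Proof.
  intros H0 Hhi. destruct (Lub_Rbar_correct E) as [Hub Hg].
  assert (Hhi' : Rbar_le (Lub_Rbar E) hi) by (apply Hg; intros x Hx; apply Hhi, Hx).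
  assert (Hlo : Rbar_le x0 (Lub_Rbar E)) by (apply Hub, H0).
  destruct (Lub_Rbar E) as [g| |] eqn:Eg; simpl in *; try contradiction.
  split.
  - intros x Hx. specialize (Hub x Hx). simpl in Hub. exact Hub.
  - intros r Hr. assert (Rbar_le g r). { apply (Hg (Finite r)). intros x Hx; simpl; apply Hr, Hx. }
    exact H.
Qed.

Lemma dist_to_spec (x : S1) (B : S1 -> Prop) : (exists b, B b) ->
  (forall b, B b -> dist_to x B <= dS x b) /\
  (forall r, (forall b, B b -> r <= dS x b) -> r <= dist_to x B) /\
  0 <= dist_to x B /\ dist_to x B <= 1/2.
Proof.
  intros [b0 Hb0]. unfold dist_to.
  destruct (glb_spec (fun r => exists b, B b /\ r = dS x b) 0 (dS x b0)) as [H1 H2].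
  - exists b0; auto.
  - intros r [b [_ ->]]. apply dS_nonneg.
  - split; [|split; [|split]].
    + intros b Hb. apply H1. exists b; auto.
    + intros r Hr. apply H2. intros y [b [Hb ->]]. auto.
    + apply H2. intros y [b [Hb ->]]. apply dS_nonneg.
    + eapply Rle_trans; [apply H1; exists b0; split; eauto|]. apply dS_le_half.
Qed.

Lemma dist_to_lt (x : S1) (B : S1 -> Prop) r : (exists b, B b) -> dist_to x B < r ->
  exists b, B b /\ dS x b < r.
Proof.
  intros HB Hd. destruct (dist_to_spec x B HB) as [_ [H2 _]].
  apply NNPP; intros Hn. assert (r <= dist_to x B); [|lra].
  apply H2. intros b Hb. apply Rnot_lt_le. intros Hl. apply Hn. exists b; auto.
Qed.

Definition supd (A B : S1 -> Prop) := real (Lub_Rbar (fun r => exists a, A a /\ r = dist_to a B)).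

Lemma supd_spec (A B : S1 -> Prop) : (exists a, A a) -> (exists b, B b) ->
  (forall a, A a -> dist_to a B <= supd A B) /\
  (forall r, (forall a, A a -> dist_to a B <= r) -> supd A B <= r).
Proof.
  intros [a0 Ha0] HB. unfold supd.
  destruct (lub_spec (fun r => exists a, A a /\ r = dist_to a B) (1/2) (dist_to a0 B)) as [H1 H2].
  - exists a0; auto.
  - intros r [a [_ ->]]. apply (dist_to_spec a B HB).
  - split.
    + intros a Ha. apply H1. exists a; auto.
    + intros r Hr. apply H2. intros y [a [Ha ->]]. auto.
Qed.

Definition nonempty (A : S1 -> Prop) := exists a, A a.

Lemma hd_close_l (A B : S1 -> Prop) r : nonempty A -> nonempty B -> hausdorff A B < r ->
  forall a, A a -> exists b, B b /\ dS a b < r.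
Proof.
  intros HA HB Hh a Ha. apply dist_to_lt; auto.
  destruct (supd_spec A B HA HB) as [H1 _]. specialize (H1 a Ha).
  unfold hausdorff in Hh. fold (supd A B) in Hh.
  pose proof (Rmax_l (supd A B) (supd B A)). unfold supd in *. lra.
Qed.

Lemma hd_close_r (A B : S1 -> Prop) r : nonempty A -> nonempty B -> hausdorff A B < r ->
  forall b, B b -> exists a, A a /\ dS a b < r.
Proof.
  intros HA HB Hh b Hb. destruct (dist_to_lt b A r HA) as [a [Ha Hd]].
  - destruct (supd_spec B A HB HA) as [H1 _]. specialize (H1 b Hb).
    unfold hausdorff in Hh. fold (supd A B) (supd B A) in Hh.
    pose proof (Rmax_r (supd A B) (supd B A)). lra.
  - exists a; split; auto. rewrite dS_sym; auto.
Qed.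

Lemma hd_le (A B : S1 -> Prop) r : nonempty A -> nonempty B ->
  (forall a, A a -> exists b, B b /\ dS a b <= r) ->
  (forall b, B b -> exists a, A a /\ dS a b <= r) ->
  hausdorff A B <= r.
Proof.
  intros HA HB H1 H2. unfold hausdorff. fold (supd A B) (supd B A).
  apply Rmax_lub.
  - apply (proj2 (supd_spec A B HA HB)). intros a Ha. destruct (H1 a Ha) as [b [Hb Hd]].
    eapply Rle_trans; [apply (proj1 (dist_to_spec a B HB)); eauto|]. auto.
  - apply (proj2 (supd_spec B A HB HA)). intros b Hb. destruct (H2 b Hb) as [a [Ha Hd]].
    eapply Rle_trans; [apply (proj1 (dist_to_spec b A HA)); eauto|]. rewrite dS_sym; auto.
Qed.

Lemma hd_lt (A B : S1 -> Prop) r r' : nonempty A -> nonempty B -> r < r' ->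
  (forall a, A a -> exists b, B b /\ dS a b <= r) ->
  (forall b, B b -> exists a, A a /\ dS a b <= r) ->
  hausdorff A B < r'.
Proof. intros; eapply Rle_lt_trans; [apply hd_le; eauto|]; auto. Qed.

Lemma hd_refl (A : S1 -> Prop) r : nonempty A -> 0 < r -> hausdorff A A < r.
Proof.
  intros HA Hr. apply (hd_lt A A 0 r); auto; intros a Ha; exists a; rewrite dS_refl; split; auto; lra.
Qed.


Lemma choice_nat {A : Type} (P : nat -> A -> Prop) : (forall i, exists a, P i a) -> exists s : nat -> A, forall i, P i (s i).
Proof.
  intros H. exists (fun i => proj1_sig (constructive_indefinite_description _ (H i))).
  intros i. exact (proj2_sig (constructive_indefinite_description _ (H i))).
Qed.

Lemma small_inv (d : R) : 0 < d -> exists N : nat, forall i, (N <= i)%nat -> / (INR i + 1) < d.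
Proof.
  intros Hd. destruct (archimed (/ d)) as [H1 _].
  exists (Z.to_nat (up (/ d))). intros i Hi.
  assert (Hpos : 0 < / d) by (apply Rinv_0_lt_compat; lra).
  assert (IZR (up (/ d)) <= INR i).
  { apply le_INR in Hi. rewrite INR_IZR_INZ in Hi. rewrite Z2Nat.id in Hi; [lra|].
    apply le_IZR. lra. }
  pose proof (pos_INR i).
  rewrite <- (Rinv_inv d). apply Rinv_lt_contravar; [apply Rmult_lt_0_compat; lra|lra].
Qed.

Lemma inv_pos (i : nat) : 0 < / (INR i + 1).
Proof. apply Rinv_0_lt_compat. pose proof (pos_INR i). lra. Qed.

Lemma S1_cluster (w : nat -> S1) : exists z, forall e, 0 < e -> forall N, exists i, (N <= i)%nat /\ dS (w i) z < e.
Proof.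
  destruct (Bolzano_Weierstrass (fun i => proj1_sig (w i)) (fun c => 0 <= c <= 1) (compact_P3 0 1)) as [l Hl].
  { intros n. pose proof (S1_bounds (w n)). lra. }
  exists (proj l). intros e He N.
  destruct (Hl (disc l (mkposreal e He)) N) as [p [Hp Hd]].
  { exists (mkposreal e He). intros y Hy; exact Hy. }
  exists p. split; auto. unfold disc in Hd. simpl in Hd.
  rewrite <- (proj_val (w p)). eapply Rle_lt_trans; [apply dS_proj_le|]. exact Hd.
Qed.

Definition contS (h : S1 -> S1) := forall x e, 0 < e -> exists d, 0 < d /\ forall y, dS y x < d -> dS (h y) (h x) < e.
Definition ucontS (h : S1 -> S1) := forall e, 0 < e -> exists d, 0 < d /\ forall x y, dS x y < d -> dS (h x) (h y) < e.

Definition cl (O : S1 -> Prop) (x : S1) := forall e, 0 < e -> exists o, O o /\ dS x o < e.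

Lemma cl_closed O : closedS (cl O).
Proof.
  intros x Hx e He. destruct (Hx (e/2)) as [y [Hy Hxy]]; [lra|].
  destruct (Hy (e/2)) as [o [Ho Hyo]]; [lra|]. exists o; split; auto.
  pose proof (dS_triangle x y o); lra.
Qed.

Lemma cl_incl (O : S1 -> Prop) x : O x -> cl O x.
Proof. intros Hx e He. exists x; rewrite dS_refl; auto. Qed.

Lemma cl_mono (O O' : S1 -> Prop) x : (forall y, O y -> O' y) -> cl O x -> cl O' x.
Proof. intros H Hx e He. destruct (Hx e He) as [o [Ho Hd]]. exists o; auto. Qed.

Lemma closed_cl (O : S1 -> Prop) x : closedS O -> cl O x -> O x.
Proof. intros H Hx. apply H. exact Hx. Qed.

Lemma dS_zero_eq (x y : S1) : (forall e, 0 < e -> dS x y < e) -> x = y.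
Proof.
  intros H. apply dS_eq0. pose proof (dS_nonneg x y).
  destruct (Rle_lt_or_eq_dec 0 (dS x y) H0) as [Hl|Hl]; auto.
  specialize (H _ Hl). lra.
Qed.

Lemma cont_cl_image (h : S1 -> S1) (O : S1 -> Prop) w : contS h -> cl O w -> cl (fun y => exists o, O o /\ h o = y) (h w).
Proof.
  intros Hc Hw e He. destruct (Hc w e He) as [d [Hd Hh]].
  destruct (Hw d Hd) as [o [Ho Hwo]]. exists (h o). split; [exists o; auto|].
  rewrite dS_sym. apply Hh. rewrite dS_sym; auto.
Qed.

Lemma img_cl (h : S1 -> S1) (O : S1 -> Prop) z : contS h ->
  (forall e, 0 < e -> exists o, O o /\ dS (h o) z < e) -> exists w, cl O w /\ h w = z.
Proof.
  intros Hc Hz.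
  destruct (choice_nat (fun i o => O o /\ dS (h o) z < / (INR i + 1))) as [s Hs].
  { intros i. apply Hz, inv_pos. }
  destruct (S1_cluster s) as [w Hw]. exists w. split.
  - intros e He. destruct (Hw e He 0%nat) as [i [_ Hi]]. exists (s i). split; [apply Hs|]. rewrite dS_sym; auto.
  - apply dS_zero_eq. intros e He.
    destruct (Hc w (e/2)) as [d [Hd Hh]]; [lra|].
    destruct (small_inv (e/2)) as [N HN]; [lra|].
    destruct (Hw d Hd N) as [i [Hi Hdi]].
    specialize (Hh _ Hdi). destruct (Hs i) as [_ Hsi]. specialize (HN i Hi).
    pose proof (dS_triangle (h w) (h (s i)) z). rewrite dS_sym in Hh. lra.
Qed.

Lemma cont_ucont (h : S1 -> S1) : contS h -> ucontS h.
Proof.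
  intros Hc e He. apply NNPP; intros Hn.
  assert (H : forall i, exists p : S1 * S1, dS (fst p) (snd p) < / (INR i + 1) /\ e <= dS (h (fst p)) (h (snd p))).
  { intros i. apply NNPP; intros Hi. apply Hn. exists (/ (INR i + 1)). split; [apply inv_pos|].
    intros x y Hxy. apply Rnot_le_lt. intros Hle. apply Hi. exists (x, y); simpl; auto. }
  destruct (choice_nat _ H) as [s Hs].
  destruct (S1_cluster (fun i => fst (s i))) as [z Hz].
  destruct (Hc z (e/2)) as [d [Hd Hh]]; [lra|].
  destruct (small_inv (d/2)) as [N HN]; [lra|].
  destruct (Hz (d/2) ltac:(lra) N) as [i [Hi Hdi]]. simpl in Hdi.
  destruct (Hs i) as [H1 H2]. specialize (HN i Hi).
  assert (dS (snd (s i)) z < d).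
  { pose proof (dS_triangle (snd (s i)) (fst (s i)) z). rewrite (dS_sym (snd (s i)) (fst (s i))) in H0. lra. }
  assert (dS (fst (s i)) z < d) by lra.
  pose proof (Hh _ H0). pose proof (Hh _ H3).
  pose proof (dS_triangle (h (fst (s i))) (h z) (h (snd (s i)))). rewrite (dS_sym (h z)) in H6. lra.
Qed.

Lemma contS_comp (g h : S1 -> S1) : contS g -> contS h -> contS (fun x => g (h x)).
Proof.
  intros Hg Hh x e He. destruct (Hg (h x) e He) as [d1 [Hd1 H1]].
  destruct (Hh x d1 Hd1) as [d2 [Hd2 H2]]. exists d2; split; auto.
Qed.

Lemma contS_iter (h : S1 -> S1) n : contS h -> contS (Nat.iter n h).
Proof.
  intros Hh. induction n as [|n IH]; simpl.
  - intros x e He. exists e; split; auto.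
  - apply (contS_comp h (Nat.iter n h)); auto.
Qed.


Lemma cont_eps (F : R -> R) x : continuity_pt F x -> forall e, 0 < e -> exists d, 0 < d /\ forall y, Rabs (y - x) < d -> Rabs (F y - F x) < e.
Proof.
  intros H e He. destruct (H e He) as [d [Hd Hy]]. exists d; split; auto.
  intros y Hyx. destruct (Req_dec x y) as [<-|Hne].
  - rewrite Rminus_diag, Rabs_R0; auto.
  - apply (Hy y). split; [split; [exact I| exact Hne]|]. exact Hyx.
Qed.

Lemma shift_nat (F : R -> R) (c : R) : (forall x, F (x + 1) = F x + c) -> forall n x, F (x + INR n) = F x + INR n * c.
Proof.
  intros H n. induction n as [|n IH]; intros x.
  - simpl. rewrite Rplus_0_r. ring.
  - rewrite S_INR. replace (x + (INR n + 1)) with ((x + INR n) + 1) by ring. rewrite H, IH. ring.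
Qed.

Lemma shift_Z (F : R -> R) (c : R) : (forall x, F (x + 1) = F x + c) -> forall k x, F (x + IZR k) = F x + IZR k * c.
Proof.
  intros H k x. destruct (Z_le_gt_dec 0 k) as [Hk|Hk].
  - rewrite <- (Z2Nat.id k Hk). rewrite <- INR_IZR_INZ. apply shift_nat; auto.
  - assert (E : IZR k = - INR (Z.to_nat (- k))).
    { rewrite INR_IZR_INZ, Z2Nat.id by lia. rewrite opp_IZR. ring. }
    rewrite E. pose proof (shift_nat F c H (Z.to_nat (- k)) (x - INR (Z.to_nat (- k)))) as H2.
    replace (x - INR (Z.to_nat (- k)) + INR (Z.to_nat (- k))) with x in H2 by ring.
    replace (x + - INR (Z.to_nat (- k))) with (x - INR (Z.to_nat (- k))) by ring. lra.
Qed.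

Section Lift.
Variable F : R -> R.
Variable f : S1 -> S1.
Hypothesis HL : C1_diffeo_lift F f.

Lemma lift_cont x : continuity_pt F x.
Proof. destruct HL as [H1 _]. apply continuity_pt_filterlim. exact (ex_derive_continuous (K:=R_AbsRing) (V:=R_NormedModule) F x (H1 x)). Qed.

Lemma lift_proj x : f (proj x) = proj (F x).
Proof. destruct HL as [_ [_ [_ [_ H]]]]. apply H. Qed.

Lemma lift_sign : (forall x, Derive F x > 0) \/ (forall x, Derive F x < 0).
Proof.
  destruct HL as [H1 [H2 [H3 _]]].
  assert (Hc : continuity (Derive F)) by (intros x; apply continuity_pt_filterlim, H2).
  destruct (Rlt_or_le 0 (Derive F 0)) as [Hp|Hn].
  - left. intros x. destruct (Rlt_or_le 0 (Derive F x)) as [|Hx]; [lra|].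
    exfalso. destruct (Rle_lt_or_eq_dec _ _ Hx) as [Hx'|Hx']; [|apply (H3 x); auto].
    destruct (Rlt_or_le x 0) as [Hl|Hl].
    + destruct (IVT (Derive F) x 0 Hc Hl Hx' Hp) as [z [_ Hz]]. apply (H3 z Hz).
    + destruct (Rle_lt_or_eq_dec _ _ Hl) as [Hl'|Hl']; [|subst; lra].
      destruct (IVT (fun y => - Derive F y) 0 x) as [z [_ Hz]]; auto.
      * apply continuity_opp; auto.
      * lra.
      * lra.
      * apply (H3 z); lra.
  - right. intros x. destruct (Rlt_or_le (Derive F x) 0) as [|Hx]; [lra|].
    assert (Hn' : Derive F 0 < 0) by (destruct (Rle_lt_or_eq_dec _ _ Hn); auto; exfalso; apply (H3 0); auto).
    exfalso. destruct (Rle_lt_or_eq_dec _ _ Hx) as [Hx'|Hx']; [|apply (H3 x); auto].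
    destruct (Rlt_or_le 0 x) as [Hl|Hl].
    + destruct (IVT (Derive F) 0 x Hc Hl Hn' Hx') as [z [_ Hz]]. apply (H3 z Hz).
    + destruct (Rle_lt_or_eq_dec _ _ Hl) as [Hl'|Hl']; [|subst; lra].
      destruct (IVT (fun y => - Derive F y) x 0) as [z [_ Hz]]; auto.
      * apply continuity_opp; auto.
      * lra.
      * lra.
      * apply (H3 z); lra.
Qed.

Definition Incr (G : R -> R) := forall x y, x < y -> G x < G y.

Lemma lift_mono : (Incr F /\ forall x, F (x + 1) = F x + 1) \/ (Incr (fun x => - F x) /\ forall x, F (x + 1) = F x + -1).
Proof.
  destruct HL as [H1 [H2 [H3 [H4 _]]]].
  destruct lift_sign as [Hp|Hn].
  - assert (HI : Incr F).
    { intros x y Hxy. apply (incr_function F m_infty p_infty (Derive F)); simpl; auto.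
      intros z _ _. apply Derive_correct, H1. }
    left. split; auto. destruct H4 as [H4|H4]; auto.
    exfalso. specialize (HI 0 1 ltac:(lra)). rewrite <- (Rplus_0_l 1) in HI. rewrite H4 in HI. lra.
  - assert (HI : Incr (fun x => - F x)).
    { intros x y Hxy. apply (incr_function (fun x => - F x) m_infty p_infty (fun x => - Derive F x)); simpl; auto.
      - intros z _ _. apply (is_derive_opp F z (Derive F z)). apply Derive_correct, H1.
      - intros z _ _. specialize (Hn z). lra. }
    right. split; auto. destruct H4 as [H4|H4].
    + exfalso. specialize (HI 0 1 ltac:(lra)). simpl in HI. rewrite <- (Rplus_0_l 1) in HI. rewrite H4 in HI. lra.
    + intros x. rewrite H4. ring.
Qed.

Lemma lift_inj x y : F x = F y -> x = y.
Proof.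
  intros H. destruct lift_mono as [[HI _]|[HI _]]; destruct (Rtotal_order x y) as [Hl|[Hl|Hl]]; auto;
  specialize (HI _ _ Hl); simpl in HI; lra.
Qed.

Lemma lift_shiftZ : exists c, (c = 1 \/ c = -1) /\ forall k x, F (x + IZR k) = F x + IZR k * c.
Proof.
  destruct lift_mono as [[_ H]|[_ H]]; [exists 1|exists (-1)]; split; auto; apply shift_Z; auto.
Qed.

Lemma f_inj a b : f a = f b -> a = b.
Proof.
  intros H. rewrite <- (proj_val a), <- (proj_val b) in *.
  rewrite !lift_proj in H. apply proj_eq_iff in H as [k Hk].
  destruct lift_shiftZ as [c [Hc Hs]].
  apply proj_eq_iff. destruct Hc as [->| ->].
  - exists k. apply lift_inj. rewrite Hs. lra.
  - exists (- k)%Z. apply lift_inj. rewrite Hs. rewrite opp_IZR. lra.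
Qed.

Lemma lift_surj t : exists x, F x = t.
Proof.
  destruct lift_shiftZ as [c [Hc Hs]].
  destruct (archimed (Rabs (t - F 0))) as [Ha _].
  set (n := up (Rabs (t - F 0))) in *.
  assert (E1 : F (0 + IZR n) = F 0 + IZR n * c) by apply Hs.
  assert (E2 : F (0 + IZR (- n)) = F 0 + IZR (- n) * c) by apply Hs.
  rewrite opp_IZR in E2. rewrite Rplus_0_l in E1, E2.
  assert (Hcont : continuity F) by (intros x; apply lift_cont).
  destruct (IVT_gen F (IZR n) (- IZR n) t Hcont) as [x [_ Hx]].
  - rewrite E1, E2. unfold Rabs in Ha; destruct (Rcase_abs (t - F 0)); destruct Hc as [-> | ->];
    unfold Rmin, Rmax; repeat destruct Rle_dec; split; lra.
  - exists x; auto.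
Qed.

Lemma f_surj y : exists x, f x = y.
Proof.
  destruct (lift_surj (proj1_sig y)) as [x Hx]. exists (proj x). rewrite lift_proj, Hx. apply proj_val.
Qed.

Lemma f_cont : contS f.
Proof.
  intros x e He. destruct (cont_eps F (proj1_sig x) (lift_cont _) e He) as [d [Hd H]].
  exists d; split; auto. intros y Hy.
  destruct (dS_lift x y (proj1_sig x) (proj_val x)) as [q [Hq Eq]].
  rewrite <- Hq, <- (proj_val x), !lift_proj. eapply Rle_lt_trans; [apply dS_proj_le|].
  apply H. lra.
Qed.

Lemma iter_lift n x : Nat.iter n f (proj x) = proj (Nat.iter n F x).
Proof. induction n as [|n IH]; simpl; auto. rewrite IH, lift_proj. reflexivity. Qed.

Lemma iter_ex_derive n x : ex_derive (Nat.iter n F) x.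
Proof.
  destruct HL as [H1 _]. revert x. induction n as [|n IH]; intros x; simpl.
  - apply ex_derive_id.
  - apply (ex_derive_comp F (Nat.iter n F) x); auto.
Qed.

End Lift.

Lemma iter_add {A} (h : A -> A) m n x : Nat.iter (m + n) h x = Nat.iter m h (Nat.iter n h x).
Proof. induction m as [|m IH]; simpl; auto. rewrite IH; auto. Qed.

Lemma iter_mul {A} (h : A -> A) m n x : Nat.iter (m * n) h x = Nat.iter m (Nat.iter n h) x.
Proof. induction m as [|m IH]; simpl; auto. rewrite iter_add, IH; auto. Qed.

Lemma iter_succ_r {A} (h : A -> A) n x : Nat.iter (S n) h x = Nat.iter n h (h x).
Proof. replace (S n) with (n + 1)%nat by lia. rewrite iter_add. reflexivity. Qed.


Definition FwdTrap (G : R -> R) (x0 e : R) := exists u v s eta (j : nat),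
  u < v /\ v - u < e /\ u <= s <= v /\ G s = s /\ 0 < eta /\
  (forall t y, u <= t <= v -> Rabs (y - G t) < eta -> u <= y <= v) /\
  (forall y, Rabs (y - Nat.iter j G x0) < eta -> u <= y <= v).

Definition BwdTrap (G : R -> R) (x0 e : R) := exists u v s eta (j : nat),
  u < v /\ v - u < e /\ u <= s <= v /\ G s = s /\ 0 < eta /\
  (forall t y, u <= t <= v -> Rabs (G y - t) < eta -> u <= y <= v) /\
  (forall y, Rabs (Nat.iter j G y - x0) < eta -> u <= y <= v).

Lemma dside_lt (G : R -> R) s l : G s = s -> derivable_pt_lim G s l -> l < 1 ->
  exists d, 0 < d /\ (forall h, 0 < h < d -> G (s + h) < s + h) /\ (forall h, - d < h < 0 -> G (s + h) > s + h).
Proof.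
  intros Hs Hd Hl. destruct (Hd (1 - l) ltac:(lra)) as [d Hdd].
  exists d; split; [apply cond_pos|]. split.
  - intros h Hh. assert (h <> 0) by lra. assert (Rabs h < d) by (rewrite Rabs_pos_eq; lra).
    specialize (Hdd h H H0). rewrite Hs in Hdd.
    set (q := (G (s + h) - s) / h) in *. assert (E : G (s + h) - s = q * h) by (unfold q; field; auto).
    apply Rabs_def2 in Hdd. assert (q < 1) by lra. nra.
  - intros h Hh. assert (h <> 0) by lra. assert (Rabs h < d) by (rewrite Rabs_left; lra).
    specialize (Hdd h H H0). rewrite Hs in Hdd.
    set (q := (G (s + h) - s) / h) in *. assert (E : G (s + h) - s = q * h) by (unfold q; field; auto).
    apply Rabs_def2 in Hdd. assert (q < 1) by lra. nra.
Qed.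

Lemma dside_gt (G : R -> R) s l : G s = s -> derivable_pt_lim G s l -> l > 1 ->
  exists d, 0 < d /\ (forall h, 0 < h < d -> G (s + h) > s + h) /\ (forall h, - d < h < 0 -> G (s + h) < s + h).
Proof.
  intros Hs Hd Hl. destruct (Hd (l - 1) ltac:(lra)) as [d Hdd].
  exists d; split; [apply cond_pos|]. split.
  - intros h Hh. assert (h <> 0) by lra. assert (Rabs h < d) by (rewrite Rabs_pos_eq; lra).
    specialize (Hdd h H H0). rewrite Hs in Hdd.
    set (q := (G (s + h) - s) / h) in *. assert (E : G (s + h) - s = q * h) by (unfold q; field; auto).
    apply Rabs_def2 in Hdd. assert (q > 1) by lra. nra.
  - intros h Hh. assert (h <> 0) by lra. assert (Rabs h < d) by (rewrite Rabs_left; lra).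
    specialize (Hdd h H H0). rewrite Hs in Hdd.
    set (q := (G (s + h) - s) / h) in *. assert (E : G (s + h) - s = q * h) by (unfold q; field; auto).
    apply Rabs_def2 in Hdd. assert (q > 1) by lra. nra.
Qed.

Section Real.
Variable G : R -> R.
Hypothesis HI : Incr G.
Hypothesis HC : forall x, continuity_pt G x.
Hypothesis HP : forall x, G (x + 1) = G x + 1.
Hypothesis HZ : exists z, G z = z.
Hypothesis HH : forall z, G z = z -> exists l, derivable_pt_lim G z l /\ l <> 1.

Lemma incr_le x y : x <= y -> G x <= G y.
Proof. intros H. destruct (Rle_lt_or_eq_dec _ _ H) as [H'|<-]; [left; apply HI; auto|right; auto]. Qed.

Lemma incr_rev x y : G x < G y -> x < y.
Proof. intros H. destruct (Rlt_or_le x y) as [|H']; auto. apply incr_le in H'. lra. Qed.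

Lemma iter_incr n : Incr (Nat.iter n G).
Proof. induction n as [|n IH]; intros x y Hxy; simpl; auto. Qed.

Lemma iter_le n x y : x <= y -> Nat.iter n G x <= Nat.iter n G y.
Proof. intros H. destruct (Rle_lt_or_eq_dec _ _ H) as [H'|<-]; [left; apply iter_incr; auto|right; auto]. Qed.

Lemma iter_rev n x y : Nat.iter n G x < Nat.iter n G y -> x < y.
Proof. intros H. destruct (Rlt_or_le x y) as [|H']; auto. apply (iter_le n) in H'. lra. Qed.

Lemma phi_cont : continuity (fun y => G y - y).
Proof. intros x. apply continuity_pt_minus; auto. apply continuity_pt_id. Qed.

Lemma zero_above p : exists z, p < z /\ G z = z.
Proof.
  destruct HZ as [z0 Hz0]. destruct (archimed (Rabs (p - z0))) as [Ha _].
  exists (z0 + IZR (up (Rabs (p - z0)))). split.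
  - pose proof (Rle_abs (p - z0)); lra.
  - rewrite (shift_Z G 1 HP). rewrite Hz0. ring.
Qed.

Lemma zero_below p : exists z, z < p /\ G z = z.
Proof.
  destruct HZ as [z0 Hz0]. destruct (archimed (Rabs (p - z0))) as [Ha _].
  exists (z0 + IZR (- up (Rabs (p - z0)))). split.
  - rewrite opp_IZR. pose proof (Rabs_Ropp (p - z0)); pose proof (Rle_abs (-(p - z0))); lra.
  - rewrite (shift_Z G 1 HP). rewrite Hz0. ring.
Qed.

Lemma orbit_below_zero p z n : p < z -> G z = z -> Nat.iter n G p < z.
Proof. intros H Hz. induction n as [|n IH]; simpl; auto. rewrite <- Hz. apply HI; auto. Qed.

Lemma fwd_orbit p : G p > p -> exists s, G s = s /\ p < s /\ (forall n, Nat.iter n G p < s) /\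
  (forall x, p <= x < s -> G x > x) /\ (forall u, u < s -> exists n, u < Nat.iter n G p).
Proof.
  intros Hp. destruct (zero_above p) as [z [Hpz Hz]].
  set (E := fun y => exists n, y = Nat.iter n G p).
  assert (Hinc : forall n, Nat.iter n G p < Nat.iter (S n) G p).
  { induction n as [|n IH]; simpl in *; auto. }
  destruct (completeness E) as [s [Hub Hlub]].
  { exists z. intros y [n ->]. left; apply orbit_below_zero; auto. }
  { exists p. exists 0%nat. reflexivity. }
  assert (Hlt : forall n, Nat.iter n G p < s).
  { intros n. eapply Rlt_le_trans; [apply (Hinc n)|]. apply Hub. exists (S n); auto. }
  assert (Happ : forall u, u < s -> exists n, u < Nat.iter n G p).
  { intros u Hu. apply NNPP; intros Hn. assert (s <= u); [|lra]. apply Hlub.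
    intros y [n ->]. apply Rnot_lt_le. intros Hl. apply Hn. exists n; auto. }
  assert (Hps : p < s) by (apply (Rlt_trans _ _ _ (Hinc 0%nat)), Hlt).
  assert (Hfix : G s = s).
  { apply Rle_antisym.
    - apply Rnot_lt_le. intros Hgt.
      destruct (cont_eps G s (HC s) (G s - s)) as [d [Hd Hcd]]; [lra|].
      destruct (Happ (s - d)) as [n Hn]; [lra|]. pose proof (Hlt n).
      assert (Rabs (Nat.iter n G p - s) < d) by (rewrite Rabs_left; lra).
      specialize (Hcd _ H0). pose proof (Hlt (S n)). simpl in H1.
      apply Rabs_def2 in Hcd. lra.
    - apply Hlub. intros y [n ->]. destruct n as [|n].
      + simpl. left. apply Rlt_trans with (G p); [exact Hp| apply HI; exact Hps].
      + simpl. left. apply HI, Hlt. }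
  exists s. split; [|split; [|split; [|split]]]; auto.
  intros x [Hx1 Hx2]. apply Rnot_le_lt. intros Hx.
  assert (Hz' : exists z, p < z <= x /\ G z = z).
  { destruct (Rle_lt_or_eq_dec _ _ Hx1) as [Hx1'|<-]; [|lra].
    destruct (Rle_lt_or_eq_dec _ _ Hx) as [Hx'|Hx'].
    - destruct (IVT (fun y => y - G y) p x) as [w [Hw1 Hw2]]; auto.
      + intros y; apply continuity_pt_minus; [apply continuity_pt_id|auto].
      + lra.
      + lra.
      + exists w. split; [|lra]. split; [|lra]. destruct (Rle_lt_or_eq_dec _ _ (proj1 Hw1)); auto. subst. lra.
    - exists x; split; auto; lra. }
  destruct Hz' as [w [Hw Hw']]. pose proof (Hub (Nat.iter 0 G p) (ex_intro _ 0%nat eq_refl)).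
  assert (s <= w); [|lra]. apply Hlub. intros y [n ->]. left. apply orbit_below_zero; auto. lra.
Qed.

Lemma bwd_zero p : G p > p -> exists r, G r = r /\ r < p /\ (forall x, r < x <= p -> G x > x).
Proof.
  intros Hp. destruct (zero_below p) as [z [Hzp Hz]].
  set (E := fun y => y <= p /\ G y = y).
  destruct (completeness E) as [r [Hub Hlub]].
  { exists p. intros y [Hy _]; auto. }
  { exists z. split; auto; lra. }
  assert (Hrp : r <= p) by (apply Hlub; intros y [Hy _]; auto).
  assert (Hfix : G r = r).
  { apply NNPP; intros Hne. assert (He : 0 < Rabs (G r - r)) by (apply Rabs_pos_lt; lra).
    destruct (cont_eps (fun y => G y - y) r (phi_cont r) _ He) as [d [Hd Hcd]].
    assert (exists y, E y /\ r - d < y).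
    { apply NNPP; intros Hn. assert (r <= r - d); [|lra]. apply Hlub. intros y Hy.
      apply Rnot_lt_le. intros Hl. apply Hn. exists y; auto. }
    destruct H as [y [[Hy1 Hy2] Hy3]]. assert (y <= r) by (apply Hub; split; auto).
    assert (Rabs (y - r) < d) by (rewrite Rabs_left1; lra).
    specialize (Hcd _ H0). rewrite Hy2 in Hcd. rewrite Rminus_diag in Hcd.
    rewrite Rminus_0_l, Rabs_Ropp in Hcd. lra. }
  assert (r <> p) by (intros ->; lra).
  exists r. split; [|split]; auto; [lra|].
  intros x [Hx1 Hx2]. apply Rnot_le_lt. intros Hx.
  assert (Hz' : exists w, x <= w <= p /\ G w = w).
  { destruct (Rle_lt_or_eq_dec _ _ Hx2) as [Hx2'| ->]; [|lra].
    destruct (Rle_lt_or_eq_dec _ _ Hx) as [Hx'|Hx'].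
    - destruct (IVT (fun y => G y - y) x p) as [w [Hw1 Hw2]]; auto.
      + apply phi_cont.
      + lra.
      + lra.
      + exists w. split; auto. lra.
    - exists x; split; auto; lra. }
  destruct Hz' as [w [Hw Hw']]. assert (w <= r) by (apply Hub; split; [lra|auto]). lra.
Qed.

Lemma fwd_trap_pos x0 e : 0 < e -> G x0 > x0 -> FwdTrap G x0 e.
Proof.
  intros He Hx0. destruct (fwd_orbit x0 Hx0) as [s [Hs [Hxs [Hlt [Hpos Happ]]]]].
  destruct (HH s Hs) as [l [Hl Hl1]].
  destruct (Rlt_or_le l 1) as [Hlt1|Hge1].
  2:{ exfalso. destruct (dside_gt G s l Hs Hl) as [d [Hd [_ H2]]]; [lra|].
      set (h := - Rmin d (s - x0) / 2).
      assert (Hm : 0 < Rmin d (s - x0)) by (apply Rmin_glb_lt; lra).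
      pose proof (Rmin_l d (s - x0)); pose proof (Rmin_r d (s - x0)).
      specialize (H2 h ltac:(unfold h; lra)). specialize (Hpos (s + h) ltac:(unfold h; lra)). lra. }
  destruct (dside_lt G s l Hs Hl Hlt1) as [d [Hd [H1 _]]].
  set (u := Rmax x0 (s - e / 3)).
  assert (Hu1 : x0 <= u) by apply Rmax_l. assert (Hu2 : s - e/3 <= u) by apply Rmax_r.
  assert (Hus : u < s) by (unfold u; apply Rmax_lub_lt; lra).
  set (v := s + Rmin d e / 2).
  assert (Hm : 0 < Rmin d e) by (apply Rmin_glb_lt; lra).
  pose proof (Rmin_l d e); pose proof (Rmin_r d e).
  assert (Hgv : G v < v) by (apply H1; lra).
  assert (Hsv : s < v) by (unfold v; lra). assert (Hve : v - s < e/2 + e/100) by (unfold v; lra).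
  assert (Hgu : G u > u) by (apply Hpos; lra).
  destruct (Happ u Hus) as [j Hj]. pose proof (Hlt j) as Hj2.
  set (xj := Nat.iter j G x0) in *.
  set (eta := Rmin (Rmin (G u - u) (v - G v)) (Rmin (xj - u) (v - xj))).
  assert (He1 : eta <= G u - u) by (unfold eta; eapply Rle_trans; apply Rmin_l).
  assert (He2 : eta <= v - G v) by (unfold eta; eapply Rle_trans; [apply Rmin_l|apply Rmin_r]).
  assert (He3 : eta <= xj - u) by (unfold eta; eapply Rle_trans; [apply Rmin_r|apply Rmin_l]).
  assert (He4 : eta <= v - xj) by (unfold eta; eapply Rle_trans; apply Rmin_r).
  assert (Hep : 0 < eta) by (unfold eta; repeat apply Rmin_glb_lt; lra).
  exists u, v, s, eta, j. split; [lra|]. split; [lra|]. split; [lra|]. split; auto. split; auto. split.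
  - intros t y [Ht1 Ht2] Hy. apply Rabs_def2 in Hy. apply incr_le in Ht1. apply incr_le in Ht2. lra.
  - intros y Hy. apply Rabs_def2 in Hy. fold xj in Hy. lra.
Qed.

Lemma bwd_trap_pos x0 e : 0 < e -> G x0 > x0 -> BwdTrap G x0 e.
Proof.
  intros He Hx0. destruct (bwd_zero x0 Hx0) as [r [Hr [Hrx Hpos]]].
  destruct (HH r Hr) as [l [Hl Hl1]].
  destruct (Rlt_or_le 1 l) as [Hgt1|Hle1].
  2:{ exfalso. destruct (dside_lt G r l Hr Hl) as [d [Hd [H1 _]]]; [lra|].
      set (h := Rmin d (x0 - r) / 2).
      assert (Hm : 0 < Rmin d (x0 - r)) by (apply Rmin_glb_lt; lra).
      pose proof (Rmin_l d (x0 - r)); pose proof (Rmin_r d (x0 - r)).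
      specialize (H1 h ltac:(unfold h; lra)). specialize (Hpos (r + h) ltac:(unfold h; lra)). lra. }
  destruct (dside_gt G r l Hr Hl Hgt1) as [d [Hd [_ H2]]].
  set (u := r - Rmin d e / 2).
  assert (Hm : 0 < Rmin d e) by (apply Rmin_glb_lt; lra).
  pose proof (Rmin_l d e); pose proof (Rmin_r d e).
  assert (Hgu : G u < u) by (unfold u; replace (r - Rmin d e / 2) with (r + - (Rmin d e / 2)) by ring; apply H2; lra).
  assert (Hur : u < r) by (unfold u; lra). assert (Hru : r - u <= e/2) by (unfold u; lra).
  set (v := Rmin x0 (r + e / 3)).
  assert (Hv1 : v <= x0) by apply Rmin_l. assert (Hv2 : v <= r + e/3) by apply Rmin_r.
  assert (Hrv : r < v) by (unfold v; apply Rmin_glb_lt; lra).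
  assert (Hgv : G v > v) by (apply Hpos; lra).
  destruct (fwd_orbit v Hgv) as [s' [Hs' [Hvs' [_ [Hpos' Happ']]]]].
  assert (Hx0s : x0 < s').
  { apply Rnot_le_lt; intros Hle. specialize (Hpos s' ltac:(lra)). lra. }
  destruct (Happ' x0 Hx0s) as [j Hj].
  assert (Hju : forall n, Nat.iter n G u <= u).
  { induction n as [|n IH]; simpl; [lra|]. apply incr_le in IH. lra. }
  pose proof (Hju j) as Hju'.
  set (eta := Rmin (Rmin (x0 - Nat.iter j G u) (Nat.iter j G v - x0)) (Rmin (u - G u) (G v - v))).
  assert (He1 : eta <= x0 - Nat.iter j G u) by (unfold eta; eapply Rle_trans; apply Rmin_l).
  assert (He2 : eta <= Nat.iter j G v - x0) by (unfold eta; eapply Rle_trans; [apply Rmin_l|apply Rmin_r]).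
  assert (He3 : eta <= u - G u) by (unfold eta; eapply Rle_trans; [apply Rmin_r|apply Rmin_l]).
  assert (He4 : eta <= G v - v) by (unfold eta; eapply Rle_trans; apply Rmin_r).
  assert (Hep : 0 < eta) by (unfold eta; repeat apply Rmin_glb_lt; lra).
  exists u, v, r, eta, j. split; [lra|]. split; [lra|]. split; [lra|]. split; auto. split; auto. split.
  - intros t y [Ht1 Ht2] Hy. apply Rabs_def2 in Hy.
    split; left; [apply incr_rev|apply incr_rev]; lra.
  - intros y Hy. apply Rabs_def2 in Hy.
    split; left; [apply (iter_rev j)|apply (iter_rev j)]; lra.
Qed.

End Real.

Lemma eps_cont (F : R -> R) x : (forall e, 0 < e -> exists d, 0 < d /\ forall y, Rabs (y - x) < d -> Rabs (F y - F x) < e) -> continuity_pt F x.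
Proof.
  intros H e He. destruct (H e He) as [d [Hd Hy]]. exists d. split; [lra|].
  intros y [_ Hyx]. apply Hy. exact Hyx.
Qed.

Lemma iter_mirror (G : R -> R) n x : Nat.iter n (fun y => - G (- y)) x = - Nat.iter n G (- x).
Proof.
  induction n as [|n IH]; simpl; [ring|]. rewrite IH, Ropp_involutive. reflexivity.
Qed.

Section Mirror.
Variable G : R -> R.
Hypothesis HI : Incr G.
Hypothesis HC : forall x, continuity_pt G x.
Hypothesis HP : forall x, G (x + 1) = G x + 1.
Hypothesis HZ : exists z, G z = z.
Hypothesis HH : forall z, G z = z -> exists l, derivable_pt_lim G z l /\ l <> 1.

Let Gm := fun y => - G (- y).

Lemma m_HI : Incr Gm.
Proof. intros x y H. unfold Gm. apply Ropp_lt_contravar. apply HI. lra. Qed.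

Lemma m_HC x : continuity_pt Gm x.
Proof.
  apply eps_cont. intros e He. destruct (cont_eps G (- x) (HC (- x)) e He) as [d [Hd H]].
  exists d; split; auto. intros y Hy. unfold Gm.
  replace (- G (- y) - - G (- x)) with (- (G (- y) - G (- x))) by ring. rewrite Rabs_Ropp.
  apply H. replace (- y - - x) with (- (y - x)) by ring. rewrite Rabs_Ropp. auto.
Qed.

Lemma m_HP x : Gm (x + 1) = Gm x + 1.
Proof. unfold Gm. pose proof (HP (- (x + 1))). replace (- (x + 1) + 1) with (- x) in H by ring. lra. Qed.

Lemma m_HZ : exists z, Gm z = z.
Proof. destruct HZ as [z Hz]. exists (- z). unfold Gm. rewrite Ropp_involutive, Hz. ring. Qed.

Lemma m_HH z : Gm z = z -> exists l, derivable_pt_lim Gm z l /\ l <> 1.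
Proof.
  intros Hz. unfold Gm in Hz. assert (Hz' : G (- z) = - z) by lra.
  destruct (HH _ Hz') as [l [Hl Hl1]]. exists l. split; auto.
  intros e He. destruct (Hl e He) as [d Hd]. exists d. intros h Hh Hhd.
  assert (Hh' : - h <> 0) by lra. assert (Hhd' : Rabs (- h) < d) by (rewrite Rabs_Ropp; auto).
  specialize (Hd (- h) Hh' Hhd'). unfold Gm.
  replace ((- G (- (z + h)) - - G (- z)) / h) with ((G (- z + - h) - G (- z)) / - h); auto.
  replace (- (z + h)) with (- z + - h) by ring. field. auto.
Qed.

Lemma fwd_trap x0 e : 0 < e -> G x0 <> x0 -> FwdTrap G x0 e.
Proof.
  intros He Hne. destruct (Rlt_or_le x0 (G x0)) as [Hgt|Hle].
  - apply fwd_trap_pos; auto.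
  - assert (Hlt : G x0 < x0) by (destruct (Rle_lt_or_eq_dec _ _ Hle); auto; congruence).
    destruct (fwd_trap_pos Gm m_HI m_HC m_HP m_HZ m_HH (- x0) e He) as [u [v [s [eta [j H]]]]].
    { unfold Gm. rewrite Ropp_involutive. lra. }
    destruct H as [H1 [H2 [H3 [H4 [H5 [H6 H7]]]]]].
    exists (- v), (- u), (- s), eta, j. unfold Gm in H4.
    split; [lra|]. split; [lra|]. split; [lra|]. split; [lra|]. split; auto. split.
    + intros t y Ht Hy. assert (u <= - y <= v); [|lra]. apply (H6 (- t)); [lra|].
      unfold Gm. rewrite Ropp_involutive. replace (- y - - G t) with (- (y - G t)) by ring. rewrite Rabs_Ropp. auto.
    + intros y Hy. assert (u <= - y <= v); [|lra]. apply H7.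
      unfold Gm in *. rewrite iter_mirror, Ropp_involutive. replace (- y - - Nat.iter j G x0) with (- (y - Nat.iter j G x0)) by ring. rewrite Rabs_Ropp. auto.
Qed.

Lemma bwd_trap x0 e : 0 < e -> G x0 <> x0 -> BwdTrap G x0 e.
Proof.
  intros He Hne. destruct (Rlt_or_le x0 (G x0)) as [Hgt|Hle].
  - apply bwd_trap_pos; auto.
  - assert (Hlt : G x0 < x0) by (destruct (Rle_lt_or_eq_dec _ _ Hle); auto; congruence).
    destruct (bwd_trap_pos Gm m_HI m_HC m_HP m_HZ m_HH (- x0) e He) as [u [v [s [eta [j H]]]]].
    { unfold Gm. rewrite Ropp_involutive. lra. }
    destruct H as [H1 [H2 [H3 [H4 [H5 [H6 H7]]]]]].
    exists (- v), (- u), (- s), eta, j. unfold Gm in H4.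
    split; [lra|]. split; [lra|]. split; [lra|]. split; [lra|]. split; auto. split.
    + intros t y Ht Hy. assert (u <= - y <= v); [|lra]. apply (H6 (- t)); [lra|].
      unfold Gm. rewrite Ropp_involutive. replace (- G y - - t) with (- (G y - t)) by ring. rewrite Rabs_Ropp. auto.
    + intros y Hy. assert (u <= - y <= v); [|lra]. apply H7.
      unfold Gm in *. rewrite iter_mirror, Ropp_involutive. replace (- Nat.iter j G y - - x0) with (- (Nat.iter j G y - x0)) by ring. rewrite Rabs_Ropp. auto.
Qed.

End Mirror.


Definition per (f : S1 -> S1) x := periodic_pt whole_circle f x.
Definition nw (f : S1 -> S1) x := nonwandering whole_circle dS f x.

Definition CircFwd (g : S1 -> S1) (a : S1) (e : R) := exists (T : S1 -> Prop) eta (j : nat) c,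
  0 < eta /\ g c = c /\ T c /\ (forall y z, T y -> T z -> dS y z < e) /\
  (forall t y, T t -> dS y (g t) < eta -> T y) /\ (forall y, dS y (Nat.iter j g a) < eta -> T y).

Definition CircBwd (g : S1 -> S1) (a : S1) (e : R) := exists (T : S1 -> Prop) eta (j : nat) c,
  0 < eta /\ g c = c /\ T c /\ (forall y z, T y -> T z -> dS y z < e) /\
  (forall t y, T t -> dS (g y) t < eta -> T y) /\ (forall y, dS (Nat.iter j g y) a < eta -> T y).

Lemma iter_fix {A} (h : A -> A) n k x : Nat.iter n h x = x -> Nat.iter (k * n) h x = x.
Proof. intros H. induction k as [|k IH]; [reflexivity|]. rewrite Nat.mul_succ_l, iter_add, H, IH. reflexivity. Qed.

Lemma per_nw f x : per f x -> nw f x.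
Proof.
  intros [_ [n [Hn Hx]]]. split; [exact I|]. intros e He. exists n, x. split; auto. split; [exact I|].
  rewrite Hx, dS_refl. auto.
Qed.

Lemma exists_nw f : contS f -> exists z, nw f z.
Proof.
  intros Hc. destruct (S1_cluster (fun i => Nat.iter i f (proj 0))) as [z Hz].
  exists z. split; [exact I|]. intros e He.
  destruct (Hz e He 0%nat) as [i [_ Hi]]. destruct (Hz e He (S i)) as [i' [Hi' Hi'2]].
  exists (i' - i)%nat, (Nat.iter i f (proj 0)). split; [lia|]. split; [exact I|]. split; auto.
  rewrite <- iter_add. replace (i' - i + i)%nat with i' by lia. auto.
Qed.

Lemma period_bound f (l : list S1) : exists M, (0 < M)%nat /\ forall c, In c l -> per f c -> Nat.iter M f c = c.
Proof.
  induction l as [|a l IH].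
  - exists 1%nat. split; [lia|]. intros c [].
  - destruct IH as [M [HM H]]. destruct (classic (per f a)) as [[_ [n [Hn Ha]]]|Hna].
    + exists (n * M)%nat. split; [lia|]. intros c [<-|Hc] Hp.
      * rewrite Nat.mul_comm. apply iter_fix; auto.
      * apply iter_fix, H; auto.
    + exists M. split; auto. intros c [<-|Hc] Hp; [contradiction|]. apply H; auto.
Qed.

Lemma iter_double {A} (h : A -> A) m x : Nat.iter (2 * m) h x = Nat.iter m (fun y => h (h y)) x.
Proof.
  induction m as [|m IH]; [reflexivity|].
  replace (2 * S m)%nat with (S (S (2 * m))) by lia. rewrite !Nat.iter_succ, IH. reflexivity.
Qed.

Lemma iter_incr_gen (H : R -> R) m : Incr H -> Incr (Nat.iter m H).
Proof. intros HI. induction m as [|m IH]; intros x y Hxy; simpl; auto. Qed.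

Lemma iter_shift_gen (H : R -> R) m : (forall x, H (x + 1) = H x + 1) -> forall x, Nat.iter m H (x + 1) = Nat.iter m H x + 1.
Proof. intros Hs. induction m as [|m IH]; intros x; simpl; auto. rewrite IH, Hs. reflexivity. Qed.

Section MS.
Variable f : S1 -> S1.
Variable F : R -> R.
Hypothesis HL : C1_diffeo_lift F f.
Hypothesis Hhyp : forall p, per f p -> hyperbolic_pt F f p.
Variable M : nat.
Hypothesis HM : (0 < M)%nat.
Hypothesis HMper : forall c, per f c -> Nat.iter M f c = c.
Variable c0 : S1.
Hypothesis Hc0 : per f c0.

Let N := (2 * M)%nat.
Let G0 := Nat.iter N F.

Lemma FF_props : Incr (fun x => F (F x)) /\ forall x, F (F (x + 1)) = F (F x) + 1.
Proof.
  destruct (lift_mono F f HL) as [[HI Hs]|[HI Hs]].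
  - split. + intros x y H. apply HI, HI, H. + intros x. rewrite Hs, Hs. reflexivity.
  - split.
    + intros x y H. assert (F y < F x) by (specialize (HI x y H); simpl in HI; lra).
      specialize (HI _ _ H0). simpl in HI. lra.
    + intros x. rewrite Hs. pose proof (Hs (F x + - 1)). replace (F x + - 1 + 1) with (F x) in H by ring. lra.
Qed.

Lemma G0_eq x : G0 x = Nat.iter M (fun y => F (F y)) x.
Proof. apply iter_double. Qed.

Lemma G0_incr : Incr G0.
Proof.
  destruct FF_props as [HI _]. intros x y H. rewrite !G0_eq. apply iter_incr_gen; auto.
Qed.

Lemma G0_shift x : G0 (x + 1) = G0 x + 1.
Proof.
  destruct FF_props as [_ Hs]. rewrite !G0_eq. apply iter_shift_gen; auto.
Qed.

Lemma G0_cont x : continuity_pt G0 x.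
Proof.
  apply continuity_pt_filterlim.
  exact (ex_derive_continuous (K:=R_AbsRing) (V:=R_NormedModule) G0 x (iter_ex_derive F f HL N x)).
Qed.

Let g := Nat.iter N f.

Lemma g_lift0 x : g (proj x) = proj (G0 x).
Proof. apply iter_lift; auto. Qed.

Lemma g_per c : per f c -> g c = c.
Proof. intros H. unfold g, N. apply iter_fix. apply HMper, H. Qed.
Variable k : Z.
Hypothesis Hk : G0 (proj1_sig c0) = proj1_sig c0 + IZR k.

Let Gz := fun x => G0 x - IZR k.

Lemma Gz_incr : Incr Gz.
Proof. intros x y H. unfold Gz. pose proof (G0_incr x y H). lra. Qed.

Lemma Gz_cont x : continuity_pt Gz x.
Proof. unfold Gz. apply continuity_pt_minus; [apply G0_cont|apply continuity_pt_const; intros a b; reflexivity]. Qed.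

Lemma Gz_shift x : Gz (x + 1) = Gz x + 1.
Proof. unfold Gz. rewrite G0_shift. ring. Qed.

Lemma Gz_zero : exists z, Gz z = z.
Proof. exists (proj1_sig c0). unfold Gz. rewrite Hk. ring. Qed.

Lemma g_lift x : g (proj x) = proj (Gz x).
Proof. rewrite g_lift0. unfold Gz. rewrite proj_sub. reflexivity. Qed.

Lemma iter_g_lift j x : Nat.iter j g (proj x) = proj (Nat.iter j Gz x).
Proof. induction j as [|j IH]; simpl; auto. rewrite IH, g_lift. reflexivity. Qed.

Lemma N_pos : (0 < N)%nat.
Proof. unfold N. lia. Qed.

Lemma g_fix_per c : g c = c -> per f c.
Proof. intros H. split; [exact I|]. exists N. split; [apply N_pos|]. exact H. Qed.

Lemma Gz_hyp z : Gz z = z -> exists l, derivable_pt_lim Gz z l /\ l <> 1.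
Proof.
  intros Hz. assert (Hp : per f (proj z)).
  { apply g_fix_per. rewrite g_lift, Hz. reflexivity. }
  specialize (Hhyp _ Hp N z N_pos). 
  assert (Hgz : Nat.iter N f (proj z) = proj z) by (fold g; rewrite g_lift, Hz; reflexivity).
  specialize (Hhyp Hgz eq_refl).
  exists (Derive (Nat.iter N F) z). split.
  - assert (H1 : derivable_pt_lim G0 z (Derive (Nat.iter N F) z)).
    { apply is_derive_Reals. apply Derive_correct. apply (iter_ex_derive F f HL). }
    pose proof (derivable_pt_lim_minus G0 (fun _ => IZR k) z _ 0 H1 (derivable_pt_lim_const (IZR k) z)) as H2.
    rewrite Rminus_0_r in H2. exact H2.
  - intros Heq. apply Hhyp. rewrite Heq. apply Rabs_R1.
Qed.

Lemma Gz_shiftZ j (k' : Z) x : Nat.iter j Gz (x + IZR k') = Nat.iter j Gz x + IZR k'.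
Proof.
  rewrite (shift_Z (Nat.iter j Gz) 1). - ring. - apply iter_shift_gen. apply Gz_shift.
Qed.

Lemma circ_fwd a e : 0 < e -> ~ per f a -> CircFwd g a e.
Proof.
  intros He Hna. set (x0 := proj1_sig a).
  assert (Hne : Gz x0 <> x0).
  { intros H. apply Hna, g_fix_per. rewrite <- (proj_val a). fold x0. rewrite g_lift, H. reflexivity. }
  destruct (fwd_trap Gz Gz_incr Gz_cont Gz_shift Gz_zero Gz_hyp x0 e He Hne) as [u [v [s [eta [j H]]]]].
  destruct H as [H1 [H2 [H3 [H4 [H5 [H6 H7]]]]]].
  exists (fun y => exists t, u <= t <= v /\ proj t = y), eta, j, (proj s).
  split; auto. split; [rewrite g_lift, H4; reflexivity|]. split; [exists s; auto|]. split; [|split].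
  - intros y z [t1 [Ht1 <-]] [t2 [Ht2 <-]]. eapply Rle_lt_trans; [apply dS_proj_le|].
    unfold Rabs; destruct Rcase_abs; lra.
  - intros t y [t' [Ht' <-]] Hy. rewrite g_lift in Hy.
    destruct (dS_lift (proj (Gz t')) y (Gz t') eq_refl) as [q [Hq Eq]].
    exists q. split; auto. apply (H6 t'); auto. rewrite Eq; auto.
  - intros y Hy. rewrite <- (proj_val a) in Hy. fold x0 in Hy. rewrite iter_g_lift in Hy.
    destruct (dS_lift (proj (Nat.iter j Gz x0)) y (Nat.iter j Gz x0) eq_refl) as [q [Hq Eq]].
    exists q. split; auto. apply H7. rewrite Eq; auto.
Qed.

Lemma circ_bwd a e : 0 < e -> ~ per f a -> CircBwd g a e.
Proof.
  intros He Hna. set (x0 := proj1_sig a).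
  assert (Hne : Gz x0 <> x0).
  { intros H. apply Hna, g_fix_per. rewrite <- (proj_val a). fold x0. rewrite g_lift, H. reflexivity. }
  destruct (bwd_trap Gz Gz_incr Gz_cont Gz_shift Gz_zero Gz_hyp x0 e He Hne) as [u [v [s [eta [j H]]]]].
  destruct H as [H1 [H2 [H3 [H4 [H5 [H6 H7]]]]]].
  exists (fun y => exists t, u <= t <= v /\ proj t = y), eta, j, (proj s).
  split; auto. split; [rewrite g_lift, H4; reflexivity|]. split; [exists s; auto|]. split; [|split].
  - intros y z [t1 [Ht1 <-]] [t2 [Ht2 <-]]. eapply Rle_lt_trans; [apply dS_proj_le|].
    unfold Rabs; destruct Rcase_abs; lra.
  - intros t y [t' [Ht' <-]] Hy. rewrite <- (proj_val y) in Hy. rewrite g_lift in Hy.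
    destruct (dS_proj_exact (Gz (proj1_sig y)) t') as [kk Hkk]. rewrite <- Hkk in Hy.
    exists (proj1_sig y - IZR kk). split.
    + apply (H6 t'); auto. pose proof (Gz_shiftZ 1 (- kk) (proj1_sig y)) as E. simpl in E.
      rewrite opp_IZR in E. replace (proj1_sig y + - IZR kk) with (proj1_sig y - IZR kk) in E by ring.
      rewrite E. replace (Gz (proj1_sig y) + - IZR kk - t') with (Gz (proj1_sig y) - t' - IZR kk) by ring. auto.
    + rewrite proj_sub. apply proj_val.
  - intros y Hy. rewrite <- (proj_val y) in Hy. rewrite <- (proj_val a) in Hy. fold x0 in Hy.
    rewrite iter_g_lift in Hy.
    destruct (dS_proj_exact (Nat.iter j Gz (proj1_sig y)) x0) as [kk Hkk]. rewrite <- Hkk in Hy.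
    exists (proj1_sig y - IZR kk). split.
    + apply H7. pose proof (Gz_shiftZ j (- kk) (proj1_sig y)) as E.
      rewrite opp_IZR in E. replace (proj1_sig y + - IZR kk) with (proj1_sig y - IZR kk) in E by ring.
      rewrite E. replace (Nat.iter j Gz (proj1_sig y) + - IZR kk - x0) with (Nat.iter j Gz (proj1_sig y) - x0 - IZR kk) by ring. auto.
    + rewrite proj_sub. apply proj_val.
Qed.

End MS.


Record Struct (f : S1 -> S1) : Prop := {
  st_cont : contS f;
  st_inj : forall a b, f a = f b -> a = b;
  st_surj : forall y, exists x, f x = y;
  st_fin : exists l, forall x, per f x -> In x l;
  st_nw : forall x, nw f x -> per f x;
  st_dyn : exists N, (0 < N)%nat /\ (forall c, per f c -> Nat.iter N f c = c) /\
     forall a e, 0 < e -> ~ per f a -> CircFwd (Nat.iter N f) a e /\ CircBwd (Nat.iter N f) a e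
}.

Lemma MS_struct f : MorseSmale f -> Struct f.
Proof.
  intros [F [HL [[l Hl] [Hnw [Hhyp _]]]]].
  assert (Hc : contS f) by (apply (f_cont F f HL)).
  assert (Hfin : forall x, per f x -> In x l) by (intros x Hx; apply Hl, per_nw, Hx).
  constructor; auto.
  - apply (f_inj F f HL).
  - apply (f_surj F f HL).
  - exists l; auto.
  - destruct (period_bound f l) as [M [HM HMl]].
    assert (HMper : forall c, per f c -> Nat.iter M f c = c) by (intros c Hp; apply HMl; auto).
    destruct (exists_nw f Hc) as [c0 Hc0]. apply Hnw in Hc0.
    assert (Hg : Nat.iter (2 * M) f c0 = c0) by (apply iter_fix, HMper, Hc0).
    rewrite <- (proj_val c0) in Hg at 1. rewrite (iter_lift F f HL) in Hg.
    rewrite <- (proj_val c0) in Hg at 2. apply proj_eq_iff in Hg. destruct Hg as [k Hk].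
    exists (2 * M)%nat. split; [lia|]. split.
    + intros c Hp. apply iter_fix, HMper, Hp.
    + intros a e He Hna. split.
      * eapply (circ_fwd f F HL Hhyp M HM c0 k Hk); eauto.
      * eapply (circ_bwd f F HL Hhyp M HM c0 k Hk); eauto.
Qed.


Lemma iter_hyper f n (A : S1 -> Prop) y : Nat.iter n (hyper_map f) A y <-> exists x, A x /\ Nat.iter n f x = y.
Proof.
  revert y. induction n as [|n IH]; intros y; simpl.
  - split; [intros H; exists y; auto|intros [x [Hx <-]]; auto].
  - unfold hyper_map at 1. split.
    + intros [x [Hx <-]]. apply IH in Hx as [z [Hz <-]]. exists z; auto.
    + intros [x [Hx <-]]. exists (Nat.iter n f x). split; auto. apply IH. exists x; auto.
Qed.

Lemma finite_closed (P : S1 -> Prop) (l : list S1) : (forall x, P x -> In x l) -> closedS P.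
Proof.
  revert P. induction l as [|a l IH]; intros P HP x Hx.
  - destruct (Hx 1 ltac:(lra)) as [y [Hy _]]. destruct (HP y Hy).
  - destruct (classic (forall e, 0 < e -> exists y, (P y /\ y <> a) /\ dS x y < e)) as [H|H].
    + assert (Hc : closedS (fun y => P y /\ y <> a)).
      { apply IH. intros y [Hy Hne]. destruct (HP y Hy) as [<-|]; [congruence|auto]. }
      apply (Hc x H).
    + apply not_all_ex_not in H as [e0 H]. apply imply_to_and in H as [He0 H].
      assert (Hxa : x = a).
      { apply dS_zero_eq. intros e He. destruct (Hx (Rmin e e0)) as [y [Hy Hxy]]; [apply Rmin_glb_lt; lra|].
        destruct (classic (y = a)) as [->|Hne].
        - pose proof (Rmin_l e e0); lra.
        - exfalso. apply H. exists y. split; auto. pose proof (Rmin_r e e0); lra. }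
      subst x. destruct (Hx e0 He0) as [y [Hy Hd]].
      apply NNPP; intros Hna. apply H. exists y. split; auto.
      split; auto. intros ->. contradiction.
Qed.

Lemma hd_sym A B : hausdorff A B = hausdorff B A.
Proof. unfold hausdorff. apply Rmax_comm. Qed.

Lemma hd_triangle P Q R r1 r2 : nonempty P -> nonempty Q -> nonempty R ->
  hausdorff P Q < r1 -> hausdorff Q R < r2 -> hausdorff P R <= r1 + r2.
Proof.
  intros HP HQ HR H1 H2. apply hd_le; auto.
  - intros p Hp. destruct (hd_close_l P Q r1 HP HQ H1 p Hp) as [q [Hq Hpq]].
    destruct (hd_close_l Q R r2 HQ HR H2 q Hq) as [r [Hr Hqr]].
    exists r. split; auto. pose proof (dS_triangle p q r). lra.
  - intros r Hr. destruct (hd_close_r Q R r2 HQ HR H2 r Hr) as [q [Hq Hqr]].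
    destruct (hd_close_r P Q r1 HP HQ H1 q Hq) as [p [Hp Hpq]].
    exists p. split; auto. pose proof (dS_triangle p q r). lra.
Qed.

Lemma img_closed (h : S1 -> S1) P : contS h -> closedS P -> closedS (hyper_map h P).
Proof.
  intros Hc HP z Hz. destruct (img_cl h P z Hc) as [w [Hw Hwz]].
  - intros e He. destruct (Hz e He) as [y [[o [Ho <-]] Hd]]. exists o. split; auto. rewrite dS_sym; auto.
  - exists w. split; auto.
Qed.

Lemma hyper_img (h : S1 -> S1) P : contS h -> hyper P -> hyper (hyper_map h P).
Proof.
  intros Hc [HP [x Hx]]. split; [apply img_closed; auto|]. exists (h x), x; auto.
Qed.

Lemma hyper_iter (h : S1 -> S1) n P : contS h -> hyper P -> hyper (Nat.iter n (hyper_map h) P).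
Proof. intros Hc HP. induction n as [|n IH]; simpl; auto. apply hyper_img; auto. Qed.

Lemma hd_cont (h : S1 -> S1) : ucontS h -> forall e, 0 < e -> exists d, 0 < d /\ forall P Q, nonempty P -> nonempty Q ->
  hausdorff P Q < d -> hausdorff (hyper_map h P) (hyper_map h Q) < e.
Proof.
  intros Hu e He. destruct (Hu (e/2) ltac:(lra)) as [d [Hd Hh]]. exists d. split; auto.
  intros P Q HP HQ HPQ. destruct HP as [p0 Hp0], HQ as [q0 Hq0].
  apply (hd_lt _ _ (e/2)); [exists (h p0), p0; auto|exists (h q0), q0; auto|lra| |].
  - intros y [p [Hp <-]]. destruct (hd_close_l P Q d (ex_intro _ p0 Hp0) (ex_intro _ q0 Hq0) HPQ p Hp) as [q [Hq Hpq]].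
    exists (h q). split; [exists q; auto|]. left. apply Hh; auto.
  - intros y [q [Hq <-]]. destruct (hd_close_r P Q d (ex_intro _ p0 Hp0) (ex_intro _ q0 Hq0) HPQ q Hq) as [p [Hp Hpq]].
    exists (h p). split; [exists p; auto|]. left. apply Hh; auto.
Qed.

Lemma pred_ext (A B : S1 -> Prop) : (forall x, A x <-> B x) -> A = B.
Proof. intros H. apply functional_extensionality. intros x. apply propositional_extensionality. apply H. Qed.

Lemma iter_hyper_eq f n A : Nat.iter n (hyper_map f) A = hyper_map (Nat.iter n f) A.
Proof. apply pred_ext. intros y. rewrite iter_hyper. reflexivity. Qed.

Lemma fixed_cl (h : S1 -> S1) (O : S1 -> Prop) : contS h ->
  (forall o, O o -> O (h o)) -> (forall o, O o -> exists p, O p /\ h p = o) ->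
  hyper_map h (cl O) = cl O.
Proof.
  intros Hc H1 H2. apply pred_ext. intros y. split.
  - intros [x [Hx <-]]. apply (cl_mono (fun y => exists o, O o /\ h o = y)).
    + intros z [o [Ho <-]]. apply H1; auto.
    + apply cont_cl_image; auto.
  - intros Hy. destruct (img_cl h O y Hc) as [w [Hw Hwy]].
    + intros e He. destruct (Hy e He) as [o [Ho Hd]]. destruct (H2 o Ho) as [p [Hp <-]].
      exists p. split; auto. rewrite dS_sym; auto.
    + exists w; auto.
Qed.

Lemma iter_surj (h : S1 -> S1) n : (forall y, exists x, h x = y) -> forall y, exists x, Nat.iter n h x = y.
Proof.
  intros Hs. induction n as [|n IH]; intros y; [exists y; reflexivity|].
  destruct (Hs y) as [z <-]. destruct (IH z) as [x <-]. exists x. reflexivity.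
Qed.

Lemma iter_inj (h : S1 -> S1) n : (forall a b, h a = h b -> a = b) -> forall a b, Nat.iter n h a = Nat.iter n h b -> a = b.
Proof. intros Hi. induction n as [|n IH]; intros a b H; simpl in *; auto. Qed.

Lemma iter_comm {A} (h : A -> A) m n x : Nat.iter m h (Nat.iter n h x) = Nat.iter n h (Nat.iter m h x).
Proof. rewrite <- !iter_add. rewrite Nat.add_comm. reflexivity. Qed.

Definition Reach (f : S1 -> S1) (d : R) (k : nat) (x y : S1) :=
  exists c : nat -> S1, c 0%nat = x /\ c k = y /\ forall i, (i < k)%nat -> dS (f (c i)) (c (S i)) < d.

Section Reach.
Variable f : S1 -> S1.

Lemma R_refl d x : Reach f d 0 x x.
Proof. exists (fun _ => x). repeat split; auto. intros i Hi; lia. Qed.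

Lemma R_cons d k x y z : dS (f x) y < d -> Reach f d k y z -> Reach f d (S k) x z.
Proof.
  intros H [c [H0 [Hk Hi]]]. exists (fun i => match i with 0%nat => x | S i' => c i' end).
  split; auto. split; auto. intros [|i] Hl; [rewrite H0; auto|]. apply Hi. lia.
Qed.

Lemma R_uncons d k x z : Reach f d (S k) x z -> exists y, dS (f x) y < d /\ Reach f d k y z.
Proof.
  intros [c [H0 [Hk Hi]]]. exists (c 1%nat). split.
  - rewrite <- H0. apply Hi. lia.
  - exists (fun i => c (S i)). split; auto. split; auto. intros i Hl. apply Hi. lia.
Qed.

Lemma R_app d k1 k2 x y z : Reach f d k1 x y -> Reach f d k2 y z -> Reach f d (k1 + k2) x z.
Proof.
  revert x. induction k1 as [|k1 IH]; intros x H1 H2.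
  - destruct H1 as [c [H0 [Hk _]]]. simpl. rewrite <- H0, Hk. auto.
  - apply R_uncons in H1 as [x1 [Hx1 H1]]. simpl. apply (R_cons _ _ _ x1); auto.
Qed.

Lemma R_split d k1 k2 x z : Reach f d (k1 + k2) x z -> exists y, Reach f d k1 x y /\ Reach f d k2 y z.
Proof.
  revert x. induction k1 as [|k1 IH]; intros x H.
  - exists x. split; auto. apply R_refl.
  - simpl in H. apply R_uncons in H as [x1 [Hx1 H]]. destruct (IH x1 H) as [y [Hy1 Hy2]].
    exists y. split; auto. apply (R_cons _ _ _ x1); auto.
Qed.

Lemma R_one d x y : Reach f d 1 x y -> dS (f x) y < d.
Proof. intros [c [H0 [H1 Hi]]]. rewrite <- H0, <- H1. apply Hi. lia. Qed.

Lemma R_step d k x y z : Reach f d k x y -> dS (f y) z < d -> Reach f d (S k) x z.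
Proof.
  intros H1 H2. replace (S k) with (k + 1)%nat by lia. apply (R_app _ _ _ _ y); auto.
  apply (R_cons _ _ _ z); auto. apply R_refl.
Qed.

Lemma R_exact d k x : 0 < d -> Reach f d k x (Nat.iter k f x).
Proof.
  intros Hd. exists (fun i => Nat.iter i f x). split; auto. split; auto.
  intros i _. simpl. rewrite dS_refl. auto.
Qed.

Lemma R_mono d d' k x y : d <= d' -> Reach f d k x y -> Reach f d' k x y.
Proof. intros Hdd [c [H0 [H1 Hi]]]. exists c. split; auto. split; auto. intros i Hl. specialize (Hi i Hl). lra. Qed.

Lemma R_close : ucontS f -> forall k eta, 0 < eta -> exists d, 0 < d /\ forall x y, Reach f d k x y -> dS (Nat.iter k f x) y < eta.
Proof.
  intros Hu k. induction k as [|k IH]; intros eta He.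
  - exists 1. split; [lra|]. intros x y [c [H0 [H1 _]]]. simpl. rewrite H0 in H1. subst. rewrite dS_refl. auto.
  - destruct (Hu (eta/2) ltac:(lra)) as [d1 [Hd1 Hf]].
    destruct (IH d1 Hd1) as [d2 [Hd2 H2]].
    exists (Rmin d2 (eta/2)). split; [apply Rmin_glb_lt; lra|].
    intros x z H. replace (S k) with (k + 1)%nat in H by lia. apply R_split in H as [y [Hxy Hyz]].
    apply R_one in Hyz. apply (R_mono _ d2) in Hxy; [|apply Rmin_l].
    specialize (H2 _ _ Hxy). specialize (Hf _ _ H2). pose proof (Rmin_r d2 (eta/2)).
    simpl. pose proof (dS_triangle (f (Nat.iter k f x)) (f y) z). lra.
Qed.

End Reach.


Lemma point_not_in (l : list S1) : exists x, ~ In x l.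
Proof.
  set (m := fold_right Rmax 0 (map (fun x => proj1_sig x) l)).
  assert (Hm : 0 <= m < 1 /\ forall x, In x l -> proj1_sig x <= m).
  { unfold m. induction l as [|a l IH]; simpl.
    - split; [lra|]. intros x [].
    - destruct IH as [[H1 H2] H3]. pose proof (S1_bounds a).
      split; [split|].
      + eapply Rle_trans; [|apply Rmax_r]. auto.
      + apply Rmax_lub_lt; lra.
      + intros x [<-|Hx]; [apply Rmax_l|]. eapply Rle_trans; [apply H3; auto|apply Rmax_r]. }
  destruct Hm as [[Hm1 Hm2] Hm3].
  exists (proj ((m + 1) / 2)). intros Hin. apply Hm3 in Hin. simpl in Hin.
  rewrite frac_small in Hin; lra.
Qed.

Lemma wandering f : Struct f -> exists w r, 0 < r /\ ~ per f w /\
  forall n y, (0 < n)%nat -> dS y w < r -> r <= dS (Nat.iter n f y) w.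
Proof.
  intros S. destruct (st_fin f S) as [l Hl]. destruct (point_not_in l) as [w Hw].
  assert (Hnp : ~ per f w) by (intros H; apply Hw, Hl, H).
  assert (Hnw : ~ nw f w) by (intros H; apply Hnp, (st_nw f S), H).
  unfold nw, nonwandering in Hnw.
  assert (H : ~ forall e, 0 < e -> exists n y, (0 < n)%nat /\ whole_circle y /\ dS y w < e /\ dS (Nat.iter n f y) w < e).
  { intros H; apply Hnw; split; [exact I|auto]. }
  apply not_all_ex_not in H as [r H]. apply imply_to_and in H as [Hr H].
  exists w, r. split; auto. split; auto. intros n y Hn Hy. apply Rnot_lt_le. intros Hl'.
  apply H. exists n, y. split; auto. split; [exact I|]. auto.
Qed.

Definition third_step (p : R * R) (y : R) : R * R :=
  let l := fst p in let r := snd p in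
  if Rle_dec y (l + (r - l) / 3) then (r - (r - l) / 3, r) else (l, l + (r - l) / 3).

Fixpoint nest (u : nat -> R) (lo hi : R) (n : nat) : R * R :=
  match n with 0%nat => (lo, hi) | S n => third_step (nest u lo hi n) (u n) end.

Lemma nest_props (u : nat -> R) lo hi : lo < hi -> forall n,
  fst (nest u lo hi n) < snd (nest u lo hi n) /\
  fst (nest u lo hi n) <= fst (nest u lo hi (S n)) /\ snd (nest u lo hi (S n)) <= snd (nest u lo hi n) /\
  ~ (fst (nest u lo hi (S n)) <= u n <= snd (nest u lo hi (S n))).
Proof.
  intros Hlh n. induction n as [|n IH].
  - simpl. unfold third_step; simpl. destruct Rle_dec as [Hr|Hr]; [|apply Rnot_le_lt in Hr]; simpl; (split; [lra|split; [lra|split; [lra|intros [? ?]; lra]]]).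
  - destruct IH as [H1 _]. 
    assert (Hlt : fst (nest u lo hi (S n)) < snd (nest u lo hi (S n))).
    { simpl. unfold third_step. destruct Rle_dec as [Hr|Hr]; [|apply Rnot_le_lt in Hr]; simpl; lra. }
    split; auto. change (nest u lo hi (S (S n))) with (third_step (nest u lo hi (S n)) (u (S n))).
    set (p := nest u lo hi (S n)) in *. destruct p as [pl pr]. simpl in Hlt.
    unfold third_step. simpl. destruct Rle_dec as [Hr|Hr]; [|apply Rnot_le_lt in Hr]; simpl; (split; [lra|split; [lra|intros [? ?]; lra]]).
Qed.

Lemma nest_avoid (u : nat -> R) lo hi : lo < hi -> exists x, lo <= x <= hi /\ forall n, u n <> x.
Proof.
  intros Hlh. pose proof (nest_props u lo hi Hlh) as HP.
  assert (Hmono : forall n d, fst (nest u lo hi n) <= fst (nest u lo hi (n + d)) /\ snd (nest u lo hi (n + d)) <= snd (nest u lo hi n)).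
  { intros n d. induction d as [|d IH]; [rewrite Nat.add_0_r; lra|].
    replace (n + S d)%nat with (S (n + d)) by lia. destruct (HP (n + d)%nat) as [_ [H2 [H3 _]]]. lra. }
  assert (Hlr : forall m n, fst (nest u lo hi m) <= snd (nest u lo hi n)).
  { intros m n. destruct (Nat.le_ge_cases m n) as [H|H].
    - destruct (Hmono m (n - m)%nat) as [H1 _]. replace (m + (n - m))%nat with n in H1 by lia.
      destruct (HP n) as [H2 _]. lra.
    - destruct (Hmono n (m - n)%nat) as [_ H1]. replace (n + (m - n))%nat with m in H1 by lia.
      destruct (HP m) as [H2 _]. lra. }
  destruct (completeness (fun y => exists n, y = fst (nest u lo hi n))) as [x [Hub Hlub]].
  { exists hi. intros y [n ->]. apply (Hlr n 0%nat). }
  { exists lo. exists 0%nat. reflexivity. }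
  assert (Hx1 : forall n, fst (nest u lo hi n) <= x) by (intros n; apply Hub; exists n; auto).
  assert (Hx2 : forall n, x <= snd (nest u lo hi n)) by (intros n; apply Hlub; intros y [m ->]; apply Hlr).
  exists x. split; [split; [apply (Hx1 0%nat)|apply (Hx2 0%nat)]|].
  intros n Hn. destruct (HP n) as [_ [_ [_ H4]]]. apply H4. rewrite Hn. split; auto.
Qed.

Lemma interval_uncountable a b (h : R -> nat) : a < b ->
  ~ (forall s t, a < s < b -> a < t < b -> h s = h t -> s = t).
Proof.
  intros Hab Hinj.
  set (u := fun n : nat => match excluded_middle_informative (exists t, a < t < b /\ h t = n) with
                           | left H => proj1_sig (constructive_indefinite_description _ H)
                           | right _ => a end).
  assert (Hu : forall t, a < t < b -> u (h t) = t).
  { intros t Ht. unfold u. destruct excluded_middle_informative as [H|H].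
    - destruct (constructive_indefinite_description _ H) as [t' [Ht' Ht'']]. simpl. apply Hinj; auto.
    - exfalso. apply H. exists t; auto. }
  destruct (nest_avoid u (a + (b - a) / 4) (b - (b - a) / 4)) as [x [Hx Hxu]]; [lra|].
  apply (Hxu (h x)). apply Hu. lra.
Qed.


Lemma singleton_hyper w : hyper (fun y => y = w).
Proof. split; [apply (finite_closed _ (w :: nil)); intros x ->; left; auto|exists w; auto]. Qed.

Lemma part3 f : Struct f -> ~ transitive hyper hausdorff (hyper_map f).
Proof.
  intros S Ht. destruct (wandering f S) as [w [r [Hr [_ HW]]]].
  destruct (Ht (fun y => y = w) (fun y => y = w) r (singleton_hyper w) (singleton_hyper w) Hr) as [n [z [Hn [[_ [z0 Hz0]] [H1 H2]]]]].
  destruct (hd_close_l z (fun y => y = w) r (ex_intro _ z0 Hz0) (ex_intro _ w eq_refl) H1 z0 Hz0) as [b [-> Hb]].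
  assert (Hi : Nat.iter n (hyper_map f) z (Nat.iter n f z0)) by (apply iter_hyper; exists z0; auto).
  destruct (hd_close_l _ (fun y => y = w) r (ex_intro _ _ Hi) (ex_intro _ w eq_refl) H2 _ Hi) as [b [-> Hb']].
  specialize (HW n z0 Hn Hb). lra.
Qed.

Section Part1.
Variable f : S1 -> S1.
Hypothesis HS : Struct f.
Variable k : nat.
Hypothesis Hk : (1 <= k)%nat.

Definition Ok (x : S1) := fun z => exists m, Nat.iter (k * m) f x = z \/ Nat.iter (k * m) f z = x.

Lemma Ok_fwd x o : Ok x o -> Ok x (Nat.iter k f o).
Proof.
  intros [m [<-|Ho]].
  - exists (S m). left. replace (k * S m)%nat with (k + k * m)%nat by lia. apply iter_add.
  - destruct m as [|m].
    + rewrite Nat.mul_0_r in Ho. simpl in Ho. subst. exists 1%nat. left. rewrite Nat.mul_1_r. auto.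
    + exists m. right. rewrite <- iter_add. replace (k * m + k)%nat with (k * S m)%nat by lia. auto.
Qed.

Lemma Ok_bwd x o : Ok x o -> exists p, Ok x p /\ Nat.iter k f p = o.
Proof.
  intros [m [<-|Ho]].
  - destruct m as [|m].
    + destruct (iter_surj f k (st_surj f HS) (Nat.iter (k * 0) f x)) as [p Hp]. exists p. split; auto.
      exists 1%nat. right. rewrite Nat.mul_1_r. rewrite Hp. rewrite Nat.mul_0_r. reflexivity.
    + exists (Nat.iter (k * m) f x). split; [exists m; auto|].
      rewrite <- iter_add. f_equal. lia.
  - destruct (iter_surj f k (st_surj f HS) o) as [p Hp]. exists p. split; auto.
    exists (S m). right. replace (k * S m)%nat with (k * m + k)%nat by lia. rewrite iter_add, Hp. auto.
Qed.

Lemma Acl_fixed x : Nat.iter k (hyper_map f) (cl (Ok x)) = cl (Ok x).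
Proof.
  rewrite iter_hyper_eq. apply fixed_cl.
  - apply contS_iter, (st_cont f HS).
  - apply Ok_fwd.
  - apply Ok_bwd.
Qed.

Variable w : S1.
Variable r : R.
Hypothesis Hr : 0 < r.
Hypothesis HW : forall n y, (0 < n)%nat -> dS y w < r -> r <= dS (Nat.iter n f y) w.

Lemma Acl_exact x : dS x w < r -> forall j, (0 < j)%nat -> (j < k)%nat -> Nat.iter j (hyper_map f) (cl (Ok x)) <> cl (Ok x).
Proof.
  intros Hx j Hj1 Hj2 E.
  assert (Hxx : cl (Ok x) x) by (apply cl_incl; exists 0%nat; left; rewrite Nat.mul_0_r; reflexivity).
  rewrite <- E in Hxx. apply iter_hyper in Hxx as [a [Ha Hax]].
  destruct (contS_iter f j (st_cont f HS) a (r - dS x w)) as [d [Hd Hc]]; [lra|].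
  destruct (Ha d Hd) as [o [Ho Hao]]. rewrite dS_sym in Hao. specialize (Hc o Hao). rewrite Hax in Hc.
  assert (Hjo : dS (Nat.iter j f o) w < r) by (pose proof (dS_triangle (Nat.iter j f o) x w); lra).
  destruct Ho as [m [<-|Ho]].
  - rewrite <- iter_add in Hjo. specialize (HW (j + k * m)%nat x ltac:(lia) Hx). lra.
  - destruct m as [|m].
    + rewrite Nat.mul_0_r in Ho. simpl in Ho. subst o. specialize (HW j x Hj1 Hx). lra.
    + specialize (HW (k * S m - j)%nat (Nat.iter j f o) ltac:(nia) Hjo).
      rewrite <- iter_add in HW. replace (k * S m - j + j)%nat with (k * S m)%nat in HW by nia.
      rewrite Ho in HW. lra.
Qed.

Lemma Acl_inj x1 x2 : dS x1 w < r -> dS x2 w < r -> cl (Ok x1) = cl (Ok x2) -> x1 = x2.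
Proof.
  intros H1 H2 E. apply NNPP; intros Hne.
  assert (Hx2 : cl (Ok x1) x2) by (rewrite E; apply cl_incl; exists 0%nat; left; rewrite Nat.mul_0_r; reflexivity).
  assert (Hd0 : 0 < dS x1 x2).
  { destruct (Rle_lt_or_eq_dec 0 _ (dS_nonneg x1 x2)) as [|He]; auto. exfalso; apply Hne, dS_eq0; auto. }
  destruct (Hx2 (Rmin (dS x1 x2) (r - dS x2 w))) as [o [Ho Hdo]]; [apply Rmin_glb_lt; lra|].
  pose proof (Rmin_l (dS x1 x2) (r - dS x2 w)) as Hm1; pose proof (Rmin_r (dS x1 x2) (r - dS x2 w)) as Hm2.
  assert (How : dS o w < r) by (pose proof (dS_triangle o x2 w) as T; rewrite (dS_sym o x2) in T; lra).
  assert (Hox : o <> x1) by (intros ->; rewrite dS_sym in Hdo; lra).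
  destruct Ho as [m [Ho|Ho]]; (destruct m as [|m]; [rewrite Nat.mul_0_r in Ho; simpl in Ho; subst; try congruence|]).
  - apply Hox; auto.
  - rewrite <- Ho in How. specialize (HW (k * S m)%nat x1 ltac:(nia) H1). lra.
  - specialize (HW (k * S m)%nat o ltac:(nia) How). rewrite Ho in HW. lra.
Qed.

Lemma part1_core : ~ countable (fun A => has_period hyper (hyper_map f) k A).
Proof.
  intros [h Hh].
  set (w' := proj1_sig w). set (r0 := Rmin r (1/2)).
  assert (Hr0 : 0 < r0) by (apply Rmin_glb_lt; lra).
  assert (HU : forall t, 0 < t < r0 -> dS (proj (w' + t)) w < r).
  { intros t Ht. rewrite <- (proj_val w). fold w'. eapply Rle_lt_trans; [apply dS_proj_le|].
    replace (w' + t - w') with t by ring. rewrite Rabs_pos_eq by lra. pose proof (Rmin_l r (1/2)). fold r0 in H. lra. }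
  assert (HP : forall t, 0 < t < r0 -> has_period hyper (hyper_map f) k (cl (Ok (proj (w' + t))))).
  { intros t Ht. split; [split; [apply cl_closed|]|split; [lia|split; [apply Acl_fixed|]]].
    - exists (proj (w' + t)). apply cl_incl. exists 0%nat. left. rewrite Nat.mul_0_r. reflexivity.
    - intros j Hj1 Hj2. apply Acl_exact; auto. }
  apply (interval_uncountable 0 r0 (fun t => h (cl (Ok (proj (w' + t))))) Hr0).
  intros s t Hs Ht Hst. apply Hh in Hst; try apply HP; auto.
  apply Acl_inj in Hst; try apply HU; auto.
  apply proj_eq_iff in Hst as [kk Hkk].
  assert (Hkk' : IZR kk = s - t) by lra.
  assert (-1 < IZR kk < 1) by (pose proof (Rmin_r r (1/2)); fold r0 in H; lra).
  destruct H as [Ha Hb]. apply lt_IZR in Ha. apply lt_IZR in Hb.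
  assert (kk = 0%Z) by lia. subst. simpl in Hkk'. lra.
Qed.

End Part1.

Lemma part1 f : Struct f -> forall k, (1 <= k)%nat -> ~ countable (fun A => has_period hyper (hyper_map f) k A).
Proof.
  intros S k Hk. destruct (wandering f S) as [w [r [Hr [_ HW]]]].
  apply (part1_core f S k Hk w r Hr HW).
Qed.


Lemma per_iter f z n : per f z -> per f (Nat.iter n f z).
Proof.
  intros [_ [q [Hq Hz]]]. split; [exact I|]. exists q. split; auto. rewrite iter_comm, Hz. reflexivity.
Qed.

Lemma per_pre f a n : per f a -> exists z, per f z /\ Nat.iter n f z = a.
Proof.
  intros Ha. destruct Ha as [_ [q [Hq Hqa]]].
  exists (Nat.iter ((q - 1) * n) f a). split.
  - apply per_iter. split; [exact I|]. exists q; auto.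
  - rewrite <- iter_add. replace (n + (q - 1) * n)%nat with (n * q)%nat by nia. apply iter_fix; auto.
Qed.

Lemma fwd_orbit_T (g : S1 -> S1) (T : S1 -> Prop) eta j a : 0 < eta ->
  (forall t y, T t -> dS y (g t) < eta -> T y) -> (forall y, dS y (Nat.iter j g a) < eta -> T y) ->
  forall i, T (Nat.iter (j + i) g a).
Proof.
  intros He H1 H2 i. induction i as [|i IH].
  - rewrite Nat.add_0_r. apply H2. rewrite dS_refl; auto.
  - replace (j + S i)%nat with (S (j + i)) by lia. simpl. apply (H1 _ _ IH). rewrite dS_refl; auto.
Qed.

Lemma bwd_orbit_T (g : S1 -> S1) (T : S1 -> Prop) eta j a : 0 < eta ->
  (forall t y, T t -> dS (g y) t < eta -> T y) -> (forall y, dS (Nat.iter j g y) a < eta -> T y) ->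
  forall i y, Nat.iter (j + i) g y = a -> T y.
Proof.
  intros He H1 H2 i. induction i as [|i IH]; intros y Hy.
  - rewrite Nat.add_0_r in Hy. apply H2. rewrite Hy, dS_refl; auto.
  - replace (j + S i)%nat with (S (j + i)) in Hy by lia. rewrite iter_succ_r in Hy.
    apply (H1 (g y)); [apply IH; auto|]. rewrite dS_refl; auto.
Qed.

Lemma part2a f : Struct f -> ~ (forall A, recurrent hyper hausdorff (hyper_map f) A <->
                nonwandering hyper hausdorff (hyper_map f) A).
Proof.
  intros HS Hiff. destruct (wandering f HS) as [w [r [Hr [Hwp HW]]]].
  destruct (st_fin f HS) as [l Hl].
  destruct (st_dyn f HS) as [N [HN [HNper Hdyn]]].
  set (A := fun y => y = w \/ per f y).
  assert (HA : hyper A).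
  { split; [apply (finite_closed _ (w :: l)); intros x [->|Hx]; [left; auto|right; auto]|exists w; left; auto]. }
  assert (Hgper : forall c, Nat.iter N f c = c -> per f c) by (intros c Hc; split; [exact I|]; exists N; auto).
  assert (Hnw : nonwandering hyper hausdorff (hyper_map f) A).
  { split; auto. intros e He.
    destruct (Hdyn w (e/2) ltac:(lra) Hwp) as [[T [eta [j [c [He1 [Hc [HTc [Hdiam [Hinv Horb]]]]]]]]]
                                     [T' [eta' [j' [c' [He1' [Hc' [HTc' [Hdiam' [Hinv' Horb']]]]]]]]]].
    set (J := S (j + j')). set (n := (J * N)%nat).
    destruct (iter_surj f n (st_surj f HS) w) as [p Hp].
    assert (HTp : T' p).
    { apply (bwd_orbit_T _ T' eta' j' w He1' Hinv' Horb' (S j)).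
      rewrite <- iter_mul. replace (j' + S j)%nat with J by (unfold J; lia). auto. }
    assert (HTw : T (Nat.iter n f w)).
    { unfold n. rewrite iter_mul. replace J with (j + S j')%nat by (unfold J; lia).
      apply (fwd_orbit_T _ T eta j w He1 Hinv Horb). }
    set (y := fun z => z = w \/ z = p \/ per f z).
    assert (Hy : hyper y).
    { split; [apply (finite_closed _ (w :: p :: l)); intros x [->|[->|Hx]]; simpl; auto|exists w; left; auto]. }
    assert (Hn : (0 < n)%nat) by (unfold n, J; nia).
    exists n, y. split; auto. split; auto. split.
    - apply (hd_lt _ _ (e/2)); [destruct Hy; auto|destruct HA; auto|lra| |].
      + intros z [->|[->|Hz]].
        * exists w. split; [left; auto|rewrite dS_refl; lra].
        * exists c'. split; [right; apply Hgper; auto|]. left. apply Hdiam'; auto.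
        * exists z. split; [right; auto|rewrite dS_refl; lra].
      + intros a [Ha|Ha]; exists a; (split; [|rewrite dS_refl; lra]); unfold y; auto.
    - rewrite iter_hyper_eq.
      assert (Hne : nonempty (hyper_map (Nat.iter n f) y)) by (exists (Nat.iter n f w), w; split; [left|]; auto).
      apply (hd_lt _ _ (e/2)); [auto|destruct HA; auto|lra| |].
      + intros z' [z [[->|[->|Hz]] <-]].
        * exists c. split; [right; apply Hgper; auto|]. left. apply Hdiam; auto.
        * exists w. rewrite Hp. split; [left; auto|rewrite dS_refl; lra].
        * exists (Nat.iter n f z). split; [right; apply per_iter; auto|rewrite dS_refl; lra].
      + intros a [->|Ha].
        * exists (Nat.iter n f p). split; [exists p; split; [right; left|]; auto|]. rewrite Hp, dS_refl; lra.
        * destruct (per_pre f a n Ha) as [z [Hz Hza]]. exists a. split; [exists z; split; [right; right|]; auto|].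
          rewrite dS_refl; lra. }
  apply Hiff in Hnw. destruct Hnw as [_ Hrec].
  assert (HC : closedS (per f)) by (apply (finite_closed _ l); auto).
  assert (HeC : exists eC, 0 < eC /\ forall c, per f c -> eC <= dS w c).
  { apply NNPP; intros Hn. apply Hwp, HC. intros e He. apply NNPP; intros Hn'. apply Hn.
    exists e. split; auto. intros c Hc. apply Rnot_lt_le. intros Hl'. apply Hn'. exists c; auto. }
  destruct HeC as [eC [HeC HeC']].
  destruct (Hrec (Rmin r eC)) as [n [Hn Hh]]; [apply Rmin_glb_lt; auto|].
  pose proof (Rmin_l r eC); pose proof (Rmin_r r eC).
  assert (Hi : Nat.iter n (hyper_map f) A (Nat.iter n f w)) by (apply iter_hyper; exists w; split; [left|]; auto).
  destruct (hd_close_r _ A _ (ex_intro _ _ Hi) (ex_intro _ w (or_introl eq_refl)) Hh w (or_introl eq_refl)) as [a [Ha Haw]].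
  apply iter_hyper in Ha as [z [[->|Hz] <-]].
  - specialize (HW n w Hn ltac:(rewrite dS_refl; lra)). lra.
  - specialize (HeC' _ (per_iter f z n Hz)). rewrite dS_sym in HeC'. lra.
Qed.


Lemma clper_nw f A : in_closure_per hyper hausdorff (hyper_map f) A -> nonwandering hyper hausdorff (hyper_map f) A.
Proof.
  intros [HA H]. split; auto. intros e He. destruct (H e He) as [y [[Hy [n [Hn Hyn]]] Hd]].
  exists n, y. split; auto. split; auto. rewrite hd_sym. split; auto. rewrite Hyn, hd_sym; auto.
Qed.

Lemma hyper_ne A : hyper A -> nonempty A.
Proof. intros [_ H]; exact H. Qed.

Lemma nw_cr f A : contS f -> nonwandering hyper hausdorff (hyper_map f) A -> chain_recurrent hyper hausdorff (hyper_map f) A.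
Proof.
  intros Hc [HA H]. split; auto. intros e He.
  destruct (hd_cont f (cont_ucont f Hc) (e/2) ltac:(lra)) as [d [Hd HC]].
  destruct (H (Rmin d (e/4))) as [n [y [Hn [Hy [H1 H2]]]]]; [apply Rmin_glb_lt; lra|].
  pose proof (Rmin_l d (e/4)) as Hm1; pose proof (Rmin_r d (e/4)) as Hm2.
  set (c := fun i => if Nat.eq_dec i 0 then A else if Nat.eq_dec i n then A else Nat.iter i (hyper_map f) y).
  assert (Hhi : forall i, hyper (Nat.iter i (hyper_map f) y)) by (intros i; apply hyper_iter; auto).
  assert (HfA : hyper (hyper_map f A)) by (apply hyper_img; auto).
  assert (Hfy : hyper (hyper_map f y)) by (apply hyper_img; auto).
  assert (Hf0 : hausdorff (hyper_map f A) (hyper_map f y) < e/2).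
  { apply HC; try apply hyper_ne; auto. rewrite hd_sym. lra. }
  exists n, c. split; auto. split; [unfold c; destruct Nat.eq_dec; congruence|].
  split; [unfold c; destruct Nat.eq_dec; [lia|]; destruct Nat.eq_dec; congruence|].
  intros i Hi. unfold c. destruct (Nat.eq_dec i 0) as [->|Hi0].
  - split; auto. destruct (Nat.eq_dec 1 0) as [|_]; [lia|]. destruct (Nat.eq_dec 1 n) as [<-|Hn1].
    + pose proof (hd_triangle (hyper_map f A) (hyper_map f y) A (e/2) (Rmin d (e/4))) as T.
      assert (hausdorff (hyper_map f A) A <= e/2 + Rmin d (e/4)).
      { apply T; try apply hyper_ne; auto. }
      lra.
    + simpl. lra.
  - destruct (Nat.eq_dec i n) as [|_]; [lia|]. split; auto.
    destruct (Nat.eq_dec (S i) 0) as [|_]; [lia|]. destruct (Nat.eq_dec (S i) n) as [<-|HSn].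
    + simpl. simpl in H2. lra.
    + simpl. apply hd_refl; [apply hyper_ne, hyper_img, Hhi; auto|lra].
Qed.


Definition ChainCond f (A : S1 -> Prop) d n :=
  (forall x, A x -> exists y, A y /\ Reach f d n x y) /\ (forall y, A y -> exists x, A x /\ Reach f d n x y).

Lemma chain_cond f A d n (c : nat -> S1 -> Prop) : hyper A -> c 0%nat = A -> c n = A ->
  (forall i, (i < n)%nat -> hyper (c i) /\ hausdorff (hyper_map f (c i)) (c (S i)) < d) ->
  ChainCond f A d n.
Proof.
  intros HA H0 Hn Hi.
  assert (Hh : forall i, (i <= n)%nat -> hyper (c i)).
  { intros i Hl. destruct (Nat.eq_dec i n) as [->|]; [rewrite Hn; exact HA|apply Hi; lia]. }
  assert (Hne : forall i, (i <= n)%nat -> nonempty (c i)) by (intros i Hl; apply hyper_ne, Hh, Hl).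
  assert (Hnf : forall i, (i <= n)%nat -> nonempty (hyper_map f (c i))).
  { intros i Hl. destruct (Hne i Hl) as [x Hx]. exists (f x), x; auto. }
  split.
  - assert (forall i, (i <= n)%nat -> forall x, A x -> exists y, c i y /\ Reach f d i x y).
    { induction i as [|i IH]; intros Hl x Hx.
      - exists x. rewrite H0. split; auto. apply R_refl.
      - destruct (IH ltac:(lia) x Hx) as [y [Hy Hr]].
        destruct (hd_close_l _ _ d (Hnf i ltac:(lia)) (Hne (S i) Hl) (proj2 (Hi i ltac:(lia))) (f y) (ex_intro _ y (conj Hy eq_refl))) as [y' [Hy' Hd]].
        exists y'. split; auto. apply (R_step _ _ _ _ y); auto. }
    intros x Hx. destruct (H n (le_n n) x Hx) as [y [Hy Hr]]. rewrite Hn in Hy. exists y; auto.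
  - assert (forall i, (i <= n)%nat -> forall y, c i y -> exists x, A x /\ Reach f d i x y).
    { induction i as [|i IH]; intros Hl y Hy.
      - exists y. rewrite H0 in Hy. split; auto. apply R_refl.
      - destruct (hd_close_r _ _ d (Hnf i ltac:(lia)) (Hne (S i) Hl) (proj2 (Hi i ltac:(lia))) y Hy) as [p [[z [Hz <-]] Hd]].
        destruct (IH ltac:(lia) z Hz) as [x [Hx Hr]]. exists x. split; auto. apply (R_step _ _ _ _ z); auto. }
    intros y Hy. apply H; [lia|]. rewrite Hn; auto.
Qed.

Lemma chain_iter f A d n : ChainCond f A d n -> forall q,
  (forall x, A x -> exists y, A y /\ Reach f d (q * n) x y) /\ (forall y, A y -> exists x, A x /\ Reach f d (q * n) x y).
Proof.
  intros [Hf Hb] q. induction q as [|q [IHf IHb]].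
  - split; [intros x Hx; exists x|intros y Hy; exists y]; split; auto; apply R_refl.
  - split.
    + intros x Hx. destruct (Hf x Hx) as [y1 [Hy1 R1]]. destruct (IHf y1 Hy1) as [y [Hy R2]].
      exists y. split; auto. apply (R_app _ _ _ _ _ y1); auto.
    + intros y Hy. destruct (IHb y Hy) as [x1 [Hx1 R2]]. destruct (Hb x1 Hx1) as [x [Hx R1]].
      exists x. split; auto. apply (R_app _ _ _ _ _ x1); auto.
Qed.

Definition PP f (A : S1 -> Prop) a e J d := forall n, (0 < n)%nat -> ChainCond f A d n -> forall m, (0 < m)%nat ->
  (exists a', A a' /\ dS (Nat.iter (m * (J * n)) f a) a' < e) /\
  (forall y, Nat.iter (m * (J * n)) f y = a -> exists a', A a' /\ dS y a' < e).

Lemma CC_mono f A d d' n : d <= d' -> ChainCond f A d n -> ChainCond f A d' n.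
Proof.
  intros Hd [H1 H2]. split.
  - intros x Hx. destruct (H1 x Hx) as [y [Hy Hr]]. exists y. split; auto. apply (R_mono _ d); auto.
  - intros y Hy. destruct (H2 y Hy) as [x [Hx Hr]]. exists x. split; auto. apply (R_mono _ d); auto.
Qed.

Lemma PP_mult f A a e J d q d' : PP f A a e J d -> (0 < q)%nat -> d' <= d -> PP f A a e (J * q) d'.
Proof.
  intros H Hq Hd n Hn Hcc m Hm.
  replace (m * (J * q * n))%nat with ((m * q) * (J * n))%nat by nia.
  apply H; auto; [apply (CC_mono _ _ d'); auto|nia].
Qed.

Lemma PP_point f (HS : Struct f) A a e : A a -> 0 < e -> exists J d, (0 < J)%nat /\ 0 < d /\ PP f A a e J d.
Proof.
  intros Ha He. destruct (classic (per f a)) as [[_ [q [Hq Hqa]]]|Hna].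
  - exists q, 1. split; auto. split; [lra|]. intros n Hn Hcc m Hm.
    assert (Ht : Nat.iter (m * (q * n)) f a = a).
    { replace (m * (q * n))%nat with ((m * n) * q)%nat by nia. apply iter_fix; auto. }
    split.
    + exists a. rewrite Ht, dS_refl. auto.
    + intros y Hy. rewrite <- Ht in Hy. apply (iter_inj f _ (st_inj f HS)) in Hy. subst. exists a. rewrite dS_refl; auto.
  - destruct (st_dyn f HS) as [N [HN [_ Hdyn]]].
    destruct (Hdyn a e He Hna) as [[T [eta [j [c [He1 [_ [_ [Hdiam [Hinv Horb]]]]]]]]]
                                     [T' [eta' [j' [c' [He1' [_ [_ [Hdiam' [Hinv' Horb']]]]]]]]]].
    pose proof (cont_ucont f (st_cont f HS)) as Hu.
    destruct (R_close f Hu N eta He1) as [d1 [Hd1 R1]].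
    destruct (R_close f Hu (N * j) eta He1) as [d2 [Hd2 R2]].
    destruct (R_close f Hu N eta' He1') as [d3 [Hd3 R3]].
    destruct (R_close f Hu (N * j') eta' He1') as [d4 [Hd4 R4]].
    set (d := Rmin (Rmin d1 d2) (Rmin d3 d4)).
    assert (Hdd : 0 < d) by (unfold d; repeat apply Rmin_glb_lt; auto).
    assert (Hd1' : d <= d1) by (unfold d; eapply Rle_trans; apply Rmin_l).
    assert (Hd2' : d <= d2) by (unfold d; eapply Rle_trans; [apply Rmin_l|apply Rmin_r]).
    assert (Hd3' : d <= d3) by (unfold d; eapply Rle_trans; [apply Rmin_r|apply Rmin_l]).
    assert (Hd4' : d <= d4) by (unfold d; eapply Rle_trans; apply Rmin_r).
    assert (FP : forall i y, Reach f d (N * (j + i)) a y -> T y).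
    { induction i as [|i IH]; intros y Hr.
      - rewrite Nat.add_0_r in Hr. apply (R_mono _ _ d2) in Hr; auto. specialize (R2 _ _ Hr).
        apply Horb. rewrite dS_sym. rewrite <- iter_mul. rewrite Nat.mul_comm. auto.
      - replace (N * (j + S i))%nat with (N * (j + i) + N)%nat in Hr by nia.
        apply R_split in Hr as [y1 [Hr1 Hr2]]. apply IH in Hr1.
        apply (R_mono _ _ d1) in Hr2; auto. specialize (R1 _ _ Hr2).
        apply (Hinv _ _ Hr1). rewrite dS_sym. auto. }
    assert (BP : forall i x, Reach f d (N * (j' + i)) x a -> T' x).
    { induction i as [|i IH]; intros x Hr.
      - rewrite Nat.add_0_r in Hr. apply (R_mono _ _ d4) in Hr; auto. specialize (R4 _ _ Hr).
        apply Horb'. rewrite <- iter_mul. rewrite Nat.mul_comm. auto.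
      - replace (N * (j' + S i))%nat with (N + N * (j' + i))%nat in Hr by nia.
        apply R_split in Hr as [x1 [Hr1 Hr2]]. apply IH in Hr2.
        apply (R_mono _ _ d3) in Hr1; auto. specialize (R3 _ _ Hr1).
        apply (Hinv' _ _ Hr2). auto. }
    exists (N * (S j * S j'))%nat, d. split; [nia|]. split; auto.
    intros n Hn Hcc m Hm. set (P := (S j * S j' * m * n)%nat).
    assert (Ht1 : (m * (N * (S j * S j') * n))%nat = (N * (j + (P - j)))%nat) by (unfold P; nia).
    assert (Ht2 : (m * (N * (S j * S j') * n))%nat = (N * (j' + (P - j')))%nat) by (unfold P; nia).
    destruct (chain_iter f A d n Hcc (m * (N * (S j * S j')))) as [CF CB].
    rewrite <- Nat.mul_assoc in CF, CB.
    split.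
    + destruct (CF a Ha) as [y [Hy Hr]]. exists y. split; auto.
      apply Hdiam; apply (FP (P - j)%nat); rewrite <- Ht1; auto. apply R_exact; auto.
    + intros y0 Hy0. destruct (CB a Ha) as [x [Hx Hr]]. exists x. split; auto.
      apply Hdiam'; apply (BP (P - j')%nat); rewrite <- Ht2; auto.
      rewrite <- Hy0. apply R_exact; auto.
Qed.


Lemma PP_list f (HS : Struct f) A e (L : list S1) : (forall a, In a L -> A a) -> 0 < e ->
  exists J d, (0 < J)%nat /\ 0 < d /\ forall a, In a L -> PP f A a e J d.
Proof.
  intros HL He. induction L as [|a L IH].
  - exists 1%nat, 1. split; [lia|]. split; [lra|]. intros a [].
  - destruct IH as [J [d [HJ [Hd H]]]]; [intros b Hb; apply HL; right; auto|].
    destruct (PP_point f HS A a e (HL a (or_introl eq_refl)) He) as [Ja [da [HJa [Hda Ha]]]].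
    exists (J * Ja)%nat, (Rmin d da). split; [nia|]. split; [apply Rmin_glb_lt; auto|].
    intros b [<-|Hb].
    + rewrite Nat.mul_comm. apply PP_mult with da; auto. apply Rmin_r.
    + apply PP_mult with d; auto. apply Rmin_l.
Qed.

Lemma grid_close (M : nat) : (0 < M)%nat -> forall x : S1, exists i, (i < M)%nat /\ dS x (proj (INR i / INR M)) < / INR M + / INR M.
Proof.
  intros HM x. pose proof (S1_bounds x) as Hx.
  assert (HMr : 0 < INR M) by (apply lt_0_INR; auto).
  set (k := Int_part (proj1_sig x * INR M)).
  destruct (base_Int_part (proj1_sig x * INR M)) as [Hk1 Hk2]. fold k in Hk1, Hk2.
  assert (Hk0 : (0 <= k)%Z) by (apply Z.lt_succ_r; apply lt_IZR; rewrite succ_IZR; pose proof (Rmult_le_pos _ _ (proj1 Hx) (Rlt_le _ _ HMr)); lra).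
  assert (HkM : (k < Z.of_nat M)%Z) by (apply lt_IZR; rewrite <- INR_IZR_INZ; pose proof (Rmult_lt_compat_r (INR M) _ _ HMr (proj2 Hx)); lra).
  exists (Z.to_nat k). split; [lia|].
  rewrite <- (proj_val x). eapply Rle_lt_trans; [apply dS_proj_le|].
  rewrite INR_IZR_INZ, Z2Nat.id by lia.
  assert (E : proj1_sig x - IZR k / INR M = (proj1_sig x * INR M - IZR k) / INR M) by (field; lra).
  rewrite E. rewrite Rabs_pos_eq.
  - apply Rmult_lt_compat_r with (r := / INR M) in Hk2; [|apply Rinv_0_lt_compat; auto]. 
    unfold Rdiv. assert (0 < / INR M) by (apply Rinv_0_lt_compat; auto). nra.
  - unfold Rdiv. apply Rmult_le_pos; [lra|]. left; apply Rinv_0_lt_compat; auto.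
Qed.

Lemma net_exists (A : S1 -> Prop) e : 0 < e ->
  exists L, (forall a, In a L -> A a) /\ (forall a, A a -> exists a', In a' L /\ dS a a' < e).
Proof.
  intros He. destruct (small_inv (e/4)) as [N0 HN0]; [lra|].
  set (M := S N0). assert (HM : (0 < M)%nat) by (unfold M; lia).
  assert (HMe : / INR M < e/4) by (unfold M; rewrite S_INR; apply HN0; lia).
  set (gp := fun i : nat => proj (INR i / INR M)).
  assert (Hlist : forall K, exists L, (forall a, In a L -> A a) /\ forall i, (i < K)%nat ->
     (exists a, A a /\ dS a (gp i) < e/2) -> exists a', In a' L /\ dS a' (gp i) < e/2).
  { induction K as [|K [L [HL1 HL2]]].
    - exists nil. split; [intros a []|intros i Hi; lia].
    - destruct (classic (exists a, A a /\ dS a (gp K) < e/2)) as [[a [Ha Hda]]|Hn].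
      + exists (a :: L). split; [intros b [<-|Hb]; auto|].
        intros i Hi Hex. destruct (Nat.eq_dec i K) as [->|Hne].
        * exists a. split; [left|]; auto.
        * destruct (HL2 i ltac:(lia) Hex) as [a' [Ha' Hd]]. exists a'; split; [right|]; auto.
      + exists L. split; auto. intros i Hi Hex. destruct (Nat.eq_dec i K) as [->|Hne]; [contradiction|].
        apply HL2; auto; lia. }
  destruct (Hlist M) as [L [HL1 HL2]]. exists L. split; auto.
  intros a Ha. destruct (grid_close M HM a) as [i [Hi Hd]].
  destruct (HL2 i Hi) as [a' [Ha' Hd']]; [exists a; split; auto; change (proj (INR i / INR M)) with (gp i) in Hd; lra|].
  exists a'. split; auto. change (proj (INR i / INR M)) with (gp i) in Hd. pose proof (dS_triangle a (gp i) a'). rewrite (dS_sym (gp i) a') in H. lra.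
Qed.

Lemma cr_clper f (HS : Struct f) A : chain_recurrent hyper hausdorff (hyper_map f) A -> in_closure_per hyper hausdorff (hyper_map f) A.
Proof.
  intros [HA Hcr]. split; auto. intros e He.
  destruct (net_exists A (e/4)) as [L [HL1 HL2]]; [lra|].
  destruct (PP_list f HS A (e/4) L HL1) as [J [d [HJ [Hd HPP]]]]; [lra|].
  destruct (Hcr d Hd) as [n [c [Hn [Hc0 [Hcn Hci]]]]].
  pose proof (chain_cond f A d n c HA Hc0 Hcn Hci) as Hcc.
  set (K := (J * n)%nat). assert (HK : (1 <= K)%nat) by (unfold K; nia).
  set (O := fun z => exists a, In a L /\ Ok f K a z).
  destruct HA as [HAc [a0 Ha0]].
  destruct (HL2 a0 Ha0) as [b0 [Hb0 _]].
  assert (HOa : forall a, In a L -> O a) by (intros a Ha; exists a; split; auto; exists 0%nat; left; rewrite Nat.mul_0_r; reflexivity).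
  exists (cl O). split.
  - split; [split; [apply cl_closed|exists b0; apply cl_incl, HOa; auto]|].
    exists K. split; [lia|]. rewrite iter_hyper_eq. apply fixed_cl.
    + apply contS_iter, (st_cont f HS).
    + intros o [a [Ha Ho]]. exists a. split; auto. apply Ok_fwd; auto.
    + intros o [a [Ha Ho]]. destruct (Ok_bwd f HS K HK a o Ho) as [p [Hp Hpo]]. exists p. split; auto. exists a; auto.
  - apply (hd_lt _ _ (e/2)); [exists a0; auto|exists b0; apply cl_incl, HOa; auto|lra| |].
    + intros a Ha. destruct (HL2 a Ha) as [a' [Ha' Hd']]. exists a'. split; [apply cl_incl, HOa; auto|lra].
    + intros b Hb. destruct (Hb (e/4) ltac:(lra)) as [o [[a' [Ha' [m Hm]]] Hbo]].
      destruct m as [|m].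
      * rewrite Nat.mul_0_r in Hm. simpl in Hm. destruct Hm as [<-| ->]; exists a'; (split; [apply HL1; auto|]);
        rewrite dS_sym; lra.
      * destruct (HPP a' Ha' n Hn Hcc (S m) ltac:(lia)) as [HF HB].
        replace (K * S m)%nat with (S m * (J * n))%nat in Hm by (unfold K; nia).
        destruct Hm as [Hm|Hm].
        -- destruct HF as [a'' [Ha'' Hd'']]. rewrite Hm in Hd''. exists a''. split; auto.
           pose proof (dS_triangle a'' o b). rewrite (dS_sym a'' o), (dS_sym o b) in H. lra.
        -- destruct (HB o Hm) as [a'' [Ha'' Hd'']]. exists a''. split; auto.
           pose proof (dS_triangle a'' o b). rewrite (dS_sym a'' o), (dS_sym o b) in H. lra.
Qed.


Theorem proposition3p1 (f : S1 -> S1) (Hf : MorseSmale f) :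
  (forall k : nat, (1 <= k)%nat ->
     ~ countable (fun A => has_period hyper (hyper_map f) k A)) /\
  (~ (forall A, recurrent hyper hausdorff (hyper_map f) A <->
                nonwandering hyper hausdorff (hyper_map f) A) /\
   (forall A, (nonwandering hyper hausdorff (hyper_map f) A <->
               in_closure_per hyper hausdorff (hyper_map f) A) /\
              (in_closure_per hyper hausdorff (hyper_map f) A <->
               chain_recurrent hyper hausdorff (hyper_map f) A))) /\
  ~ transitive hyper hausdorff (hyper_map f).
Proof.
  pose proof (MS_struct f Hf) as HS.
  split; [apply part1; auto|]. split; [split; [apply part2a; auto|]|apply part3; auto].
  intros A. split; split; intros H.
  - apply cr_clper; auto. apply nw_cr; auto. apply (st_cont f HS).
  - apply clper_nw; auto.
  - apply nw_cr; [apply (st_cont f HS)|]. apply clper_nw; auto.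
  - apply cr_clper; auto.
Qed.
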